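(* Let $\mathcal{A},\mathcal{B}\in CP(n,m)$. Then: (1) $\hat\rho(\mathcal{A},\mathcal{B})\le\rho(\mathcal{A},\mathcal{B})$. (2) If $\mathcal{A}_1,\mathcal{B}_1\in CP(n,m)$ with $\mathcal{A}_1\preceq\mathcal{A}$ and $\mathcal{B}\preceq\mathcal{B}_1$, then $\rho(\mathcal{A}_1,\mathcal{B}_1)\le\rho(\mathcal{A},\mathcal{B})$ and $\hat\rho(\mathcal{A}_1,\mathcal{B}_1)\le\hat\rho(\mathcal{A},\mathcal{B})$. (3) There exists a weakly optimal $Y\in\mathrm{H}_{+,1,n}$. (4) If there is a weakly optimal $Y$ with $\mathcal{B}(Y)\succ0$ or $\mathcal{A}(Y)\succ0$, and $\rho(\mathcal{A},\mathcal{B})<\infty$, then $\rho(\mathcal{A},\mathcal{B})=\hat\rho(\mathcal{A},\mathcal{B})$. (5) If $\rho(\mathcal{A},\mathcal{B})<\infty$ and either $\mathcal{A}\succ0$ or $\mathcal{B}\succ0$, then $\rho(\mathcal{A},\mathcal{B})=\hat\rho(\mathcal{A},\mathcal{B})$. (6) If $\mathcal{D}_l\in CP(n,m)$ with $\mathcal{D}_l\succ0$ for $l\in\mathbb{N}$ and $\lim_{l\to\infty}\mathcal{D}_l=0$, then $\lim_{l\to\infty}\rho(\mathcal{A},\mathcal{B}+\mathcal{D}_l)=\hat\rho(\mathcal{A},\mathcal{B})$. (7) If $\mathcal{D}_l\in CP(n,m)$ with $\mathcal{D}_l\succ0$ for $l\in\mathbb{N}$, $\lim_{l\to\infty}\mathcal{D}_l=0$,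 and $\mathcal{B}(I_n)\succ0$, then $\lim_{l\to\infty}\rho(\mathcal{A}+\mathcal{D}_l,\mathcal{B})=\rho(\mathcal{A},\mathcal{B})$.
   Context: $\mathrm{H}_n$ is the real space of $n\times n$ complex Hermitian matrices, $\mathrm{H}_{+,n}$ the cone of positive semidefinite ones, $\mathrm{H}_{++,n}$ the positive definite ones, and $\mathrm{H}_{+,1,n}$ the positive semidefinite ones of trace $1$. $X\succeq Y$ ($X\succ Y$) means $X-Y$ is positive semidefinite (definite). $CP(n,m)$ is the set of completely positive maps $\mathcal{C}:\mathrm{H}_n\to\mathrm{H}_m$, i.e. maps of the form $\mathcal{C}(X)=\sum_{j=1}^kT_jXT_j^*$ with $T_j\in\mathbb{C}^{m\times n}$. For $\mathcal{C},\mathcal{D}\in CP(n,m)$, $\mathcal{C}\succeq\mathcal{D}$ (resp. $\mathcal{C}\succ\mathcal{D}$) means $\mathcal{C}(X)\succeq\mathcal{D}(X)$ (resp. $\mathcal{C}(X)\succ\mathcal{D}(X)$) for all $X\in\mathrm{H}_{+,1,n}$. For $\mathcal{A},\mathcal{B}\in CP(n,m)$ and $X\in\mathrm{H}_{+,n}\setminus\{0\}$, $r(\mathcal{A},\mathcal{B},X)=\inf\{t\ge0: t\mathcal{B}(X)-\mathcal{A}(X)\succeq0\}\in[0,\infty]$ ($\inf\emptyset=\infty$); $\rho(\mathcal{A},\mathcal{B})=\inf\{r(\mathcal{A},\mathcal{B},X):X\in\mathrm{H}_{++,n}\}$ and $\hat\rho(\mathcal{A},\mathcal{B})=\inf\{r(\mathcal{A},\mathcal{B},X):X\in\mathrm{H}_{+,n}\setminus\{0\}\}$.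 $Y\in\mathrm{H}_{+,n}\setminus\{0\}$ is weakly optimal if $r(\mathcal{A},\mathcal{B},Y)=\hat\rho(\mathcal{A},\mathcal{B})$. Convergence of maps is in any norm on linear maps $\mathrm{H}_n\to\mathrm{H}_m$. *)

(* Defs.v *)
From Stdlib Require Import Reals Lra List ClassicalEpsilon.
Open Scope R_scope.

Definition C : Type := (R * R)%type.
Definition C0 : C := (0, 0).
Definition C1 : C := (1, 0).
Definition Cre (z : C) : R := fst z.
Definition Cim (z : C) : R := snd z.
Definition Cadd (z w : C) : C := (fst z + fst w, snd z + snd w).
Definition Copp (z : C) : C := (- fst z, - snd z).
Definition Cmul (z w : C) : C :=
  (fst z * fst w - snd z * snd w, fst z * snd w + snd z * fst w).
Definition Cconj (z : C) : C := (fst z, - snd z).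
Definition RtoC (r : R) : C := (r, 0).

Fixpoint csum (n : nat) (f : nat -> C) : C :=
  match n with O => C0 | S k => Cadd (csum k f) (f k) end.
Fixpoint rsum (n : nat) (f : nat -> R) : R :=
  match n with O => 0 | S k => rsum k f + f k end.

(* ---------- matrices: only entries with indices below the dimension matter -- *)
Definition Mat : Type := nat -> nat -> C.
Definition madd (X Y : Mat) : Mat := fun i j => Cadd (X i j) (Y i j).
Definition mscale (t : R) (X : Mat) : Mat := fun i j => Cmul (RtoC t) (X i j).
Definition msub (X Y : Mat) : Mat := fun i j => Cadd (X i j) (Copp (Y i j)).
Definition Id (n : nat) : Mat := fun i j => if Nat.eqb i j then C1 else C0.

Definition Herm (n : nat) (X : Mat) : Prop :=
  forall i j, (i < n)%nat -> (j < n)%nat -> X i j = Cconj (X j i).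

Definition qform (n : nat) (X : Mat) (v : nat -> C) : C :=
  csum n (fun i => csum n (fun j => Cmul (Cmul (Cconj (v i)) (X i j)) (v j))).

Definition PSD (n : nat) (X : Mat) : Prop :=
  Herm n X /\ forall v : nat -> C, 0 <= Cre (qform n X v).
Definition PD (n : nat) (X : Mat) : Prop :=
  Herm n X /\ forall v : nat -> C, (exists i, (i < n)%nat /\ v i <> C0) ->
                                 0 < Cre (qform n X v).
Definition nonzero (n : nat) (X : Mat) : Prop :=
  exists i j, (i < n)%nat /\ (j < n)%nat /\ X i j <> C0.
Definition trace (n : nat) (X : Mat) : C := csum n (fun i => X i i).
Definition PSD1 (n : nat) (X : Mat) : Prop := PSD n X /\ trace n X = C1.

Definition Map : Type := Mat -> Mat.
Definition conjug (n : nat) (T X : Mat) : Mat := fun i j =>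
  csum n (fun k => csum n (fun l => Cmul (Cmul (T i k) (X k l)) (Cconj (T j l)))).
Fixpoint kraus_sum (n : nat) (Ts : list Mat) (X : Mat) : Mat :=
  match Ts with
  | nil => fun _ _ => C0
  | T :: Ts' => madd (conjug n T X) (kraus_sum n Ts' X)
  end.
Definition is_CP (n m : nat) (F : Map) : Prop :=
  exists Ts : list Mat, forall X, Herm n X ->
    forall i j, (i < m)%nat -> (j < m)%nat -> F X i j = kraus_sum n Ts X i j.

Definition map_add (F G : Map) : Map := fun X => madd (F X) (G X).
Definition map_le (n m : nat) (F G : Map) : Prop :=
  forall X, PSD1 n X -> PSD m (msub (G X) (F X)).
Definition map_pos (n m : nat) (F : Map) : Prop :=
  forall X, PSD1 n X -> PD m (F X).
(* lim_l D_l = 0 (pointwise on H_n, equivalent to norm convergence of linear maps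
   on the finite-dimensional space H_n) *)
Definition map_cv0 (n m : nat) (D : nat -> Map) : Prop :=
  forall X, Herm n X -> forall i j, (i < m)%nat -> (j < m)%nat ->
    Un_cv (fun l => Cre (D l X i j)) 0 /\ Un_cv (fun l => Cim (D l X i j)) 0.

Inductive ER : Type := Fin (r : R) | Inf.
Definition ERle (a b : ER) : Prop :=
  match a, b with
  | Fin x, Fin y => x <= y
  | _, Inf => True
  | Inf, Fin _ => False
  end.
Definition is_glb (S : ER -> Prop) (v : ER) : Prop :=
  (forall e, S e -> ERle v e) /\ (forall w, (forall e, S e -> ERle w e) -> ERle w v).
(* infimum (inf ∅ = ∞); well defined on sets of nonnegative values *)
Definition einf (S : ER -> Prop) : ER :=
  epsilon (inhabits Inf) (is_glb S).

Definition ER_cv (u : nat -> ER) (L : ER) : Prop :=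
  match L with
  | Fin l => forall eps, eps > 0 -> exists N, forall k, (k >= N)%nat ->
               exists x, u k = Fin x /\ Rabs (x - l) < eps
  | Inf => forall M : R, exists N, forall k, (k >= N)%nat -> ERle (Fin M) (u k)
  end.

Definition r_val (m : nat) (A B : Map) (X : Mat) : ER :=
  einf (fun e => exists t, e = Fin t /\ 0 <= t /\ PSD m (msub (mscale t (B X)) (A X))).
Definition rho (n m : nat) (A B : Map) : ER :=
  einf (fun e => exists X, PD n X /\ e = r_val m A B X).
Definition rhohat (n m : nat) (A B : Map) : ER :=
  einf (fun e => exists X, PSD n X /\ nonzero n X /\ e = r_val m A B X).
Definition weakly_optimal (n m : nat) (A B : Map) (Y : Mat) : Prop :=
  PSD n Y /\ nonzero n Y /\ r_val m A B Y = rhohat n m A B.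

(* Main.v *)
Require Import Defs.
From Stdlib Require Import Reals Lra Lia Psatz List Classical ClassicalEpsilon Ring.
Import Defs.
Open Scope R_scope.

Notation CC := Defs.C.

Lemma C_ext (z w : CC) : fst z = fst w -> snd z = snd w -> z = w.
Proof. destruct z, w; simpl; intros; subst; reflexivity. Qed.

Definition Csub (z w : CC) : CC := Cadd z (Copp w).

Lemma C_ring : ring_theory C0 C1 Cadd Cmul Csub Copp (@eq CC).
Proof.
  constructor; intros; unfold C0, C1, Cadd, Cmul, Csub, Copp; apply C_ext; simpl;
  destruct x; try destruct y; try destruct z; simpl; ring.
Qed.
Add Ring Cring : C_ring.

Lemma Cconj_add z w : Cconj (Cadd z w) = Cadd (Cconj z) (Cconj w).
Proof. apply C_ext; simpl; ring. Qed.
Lemma Cconj_mul z w : Cconj (Cmul z w) = Cmul (Cconj z) (Cconj w).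
Proof. apply C_ext; simpl; ring. Qed.
Lemma Cconj_opp z : Cconj (Copp z) = Copp (Cconj z).
Proof. apply C_ext; simpl; ring. Qed.
Lemma Cconj_invol z : Cconj (Cconj z) = z.
Proof. apply C_ext; simpl; ring. Qed.
Lemma Cconj_RtoC t : Cconj (RtoC t) = RtoC t.
Proof. apply C_ext; simpl; ring. Qed.
Lemma Cconj_C0 : Cconj C0 = C0.
Proof. apply C_ext; simpl; ring. Qed.
Lemma Cconj_C1 : Cconj C1 = C1.
Proof. apply C_ext; simpl; ring. Qed.

Lemma csum_ext n f g : (forall i, (i < n)%nat -> f i = g i) -> csum n f = csum n g.
Proof. induction n; simpl; intros H; auto. rewrite IHn by (intros; apply H; lia). rewrite H by lia; auto. Qed.
Lemma rsum_ext n f g : (forall i, (i < n)%nat -> f i = g i) -> rsum n f = rsum n g.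
Proof. induction n; simpl; intros H; auto. rewrite IHn by (intros; apply H; lia). rewrite H by lia; auto. Qed.
Lemma csum_add n f g : csum n (fun i => Cadd (f i) (g i)) = Cadd (csum n f) (csum n g).
Proof. induction n; simpl. apply C_ext; simpl; ring. rewrite IHn; ring. Qed.
Lemma csum_mull n z f : csum n (fun i => Cmul z (f i)) = Cmul z (csum n f).
Proof. induction n; simpl. apply C_ext; simpl; ring. rewrite IHn; ring. Qed.
Lemma csum_mulr n z f : csum n (fun i => Cmul (f i) z) = Cmul (csum n f) z.
Proof. induction n; simpl. apply C_ext; simpl; ring. rewrite IHn; ring. Qed.
Lemma csum_conj n f : Cconj (csum n f) = csum n (fun i => Cconj (f i)).
Proof. induction n; simpl. apply C_ext; simpl; ring. rewrite Cconj_add, IHn; auto. Qed.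
Lemma csum_opp n f : csum n (fun i => Copp (f i)) = Copp (csum n f).
Proof. induction n; simpl. apply C_ext; simpl; ring. rewrite IHn; ring. Qed.
Lemma csum_zero n : csum n (fun _ => C0) = C0.
Proof. induction n; simpl; auto. rewrite IHn; ring. Qed.
Lemma csum_swap n p f : csum n (fun i => csum p (fun j => f i j)) = csum p (fun j => csum n (fun i => f i j)).
Proof.
  induction n; simpl. rewrite csum_zero; auto.
  rewrite IHn, <- csum_add; auto.
Qed.
Lemma Cre_csum n f : Cre (csum n f) = rsum n (fun i => Cre (f i)).
Proof. induction n; simpl; auto. rewrite <- IHn; reflexivity. Qed.
Lemma Cim_csum n f : Cim (csum n f) = rsum n (fun i => Cim (f i)).
Proof. induction n; simpl; auto. rewrite <- IHn; reflexivity. Qed.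
Lemma rsum_add n f g : rsum n (fun i => f i + g i) = rsum n f + rsum n g.
Proof. induction n; simpl. ring. rewrite IHn; ring. Qed.
Lemma rsum_scal n c f : rsum n (fun i => c * f i) = c * rsum n f.
Proof. induction n; simpl. ring. rewrite IHn; ring. Qed.
Lemma rsum_le n f g : (forall i, (i < n)%nat -> f i <= g i) -> rsum n f <= rsum n g.
Proof. induction n; simpl; intros H. lra. assert (f n <= g n) by (apply H; lia). assert (rsum n f <= rsum n g) by (apply IHn; intros; apply H; lia). lra. Qed.
Lemma rsum_nonneg n f : (forall i, (i < n)%nat -> 0 <= f i) -> 0 <= rsum n f.
Proof. intros H. replace 0 with (rsum n (fun _ => 0)). apply rsum_le; auto. induction n; simpl; auto. rewrite IHn. ring. intros; apply H; lia. Qed.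
Lemma rsum_const n c : rsum n (fun _ => c) = INR n * c.
Proof. induction n. simpl; ring. change (rsum (S n) (fun _ => c)) with (rsum n (fun _ => c) + c). rewrite IHn, S_INR; ring. Qed.
Lemma rsum_single_le n f i : (forall k, (k < n)%nat -> 0 <= f k) -> (i < n)%nat -> f i <= rsum n f.
Proof.
  induction n; intros H Hi. lia. simpl.
  destruct (Nat.eq_dec i n). subst. assert (0 <= rsum n f) by (apply rsum_nonneg; intros; apply H; lia). lra.
  assert (f i <= rsum n f) by (apply IHn; [intros; apply H; lia| lia]). assert (0 <= f n) by (apply H; lia). lra.
Qed.
Lemma csum_single n f i : (i < n)%nat -> (forall k, (k < n)%nat -> k <> i -> f k = C0) -> csum n f = f i.
Proof.
  induction n; intros Hi H. lia. simpl.
  destruct (Nat.eq_dec i n). subst. rewrite csum_ext with (g := fun _ => C0). rewrite csum_zero. ring.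
  intros; apply H; lia.
  rewrite IHn by (try lia; intros; apply H; lia). rewrite (H n) by lia. ring.
Qed.
Lemma csum_two n f i j : (i < n)%nat -> (j < n)%nat -> i <> j ->
  (forall k, (k < n)%nat -> k <> i -> k <> j -> f k = C0) -> csum n f = Cadd (f i) (f j).
Proof.
  induction n; intros Hi Hj Hij H. lia. simpl.
  destruct (Nat.eq_dec i n). subst. rewrite (csum_single n f j) by (try lia; intros; apply H; lia). ring.
  destruct (Nat.eq_dec j n). subst. rewrite (csum_single n f i) by (try lia; intros; apply H; lia). ring.
  rewrite IHn by (try lia; intros; apply H; lia). rewrite (H n) by lia. ring.
Qed.
Definition Q (n : nat) (X : Mat) (v : nat -> CC) : R := Cre (qform n X v).
Definition Cn2 (z : CC) : R := Cre z * Cre z + Cim z * Cim z.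
Definition Nv (n : nat) (v : nat -> CC) : R := rsum n (fun i => Cn2 (v i)).
Definition agree (n : nat) (X Y : Mat) : Prop := forall i j, (i < n)%nat -> (j < n)%nat -> X i j = Y i j.

Lemma qform_ext n X Y v : agree n X Y -> qform n X v = qform n Y v.
Proof. intros H. unfold qform. apply csum_ext; intros i Hi; apply csum_ext; intros j Hj. rewrite H; auto. Qed.
Lemma qform_extv n X v w : (forall i, (i < n)%nat -> v i = w i) -> qform n X v = qform n X w.
Proof. intros H. unfold qform. apply csum_ext; intros i Hi; apply csum_ext; intros j Hj. rewrite !H; auto. Qed.
Lemma Q_ext n X Y v : agree n X Y -> Q n X v = Q n Y v.
Proof. intros; unfold Q; rewrite (qform_ext n X Y); auto. Qed.

Lemma qform_madd n X Y v : qform n (madd X Y) v = Cadd (qform n X v) (qform n Y v).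
Proof.
  unfold qform. rewrite <- csum_add. apply csum_ext; intros i _. rewrite <- csum_add.
  apply csum_ext; intros j _. unfold madd. ring.
Qed.
Lemma qform_mscale n t X v : qform n (mscale t X) v = Cmul (RtoC t) (qform n X v).
Proof.
  unfold qform. rewrite <- csum_mull. apply csum_ext; intros i _. rewrite <- csum_mull.
  apply csum_ext; intros j _. unfold mscale. ring.
Qed.
Lemma qform_msub n X Y v : qform n (msub X Y) v = Cadd (qform n X v) (Copp (qform n Y v)).
Proof.
  unfold qform. rewrite <- csum_opp, <- csum_add. apply csum_ext; intros i _. rewrite <- csum_opp, <- csum_add.
  apply csum_ext; intros j _. unfold msub. ring.
Qed.
Lemma Q_madd n X Y v : Q n (madd X Y) v = Q n X v + Q n Y v.
Proof. unfold Q; rewrite qform_madd; reflexivity. Qed.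
Lemma Q_msub n X Y v : Q n (msub X Y) v = Q n X v - Q n Y v.
Proof. unfold Q; rewrite qform_msub; unfold Cre, Cadd, Copp; simpl; ring. Qed.
Lemma Q_mscale n t X v : Q n (mscale t X) v = t * Q n X v.
Proof. unfold Q; rewrite qform_mscale; unfold Cre, Cmul, RtoC; simpl; ring. Qed.
Lemma Q_vscale n X v s : Q n X (fun i => Cmul (RtoC s) (v i)) = s * s * Q n X v.
Proof.
  unfold Q. replace (s*s*Cre (qform n X v)) with (Cre (Cmul (RtoC (s*s)) (qform n X v))) by (unfold Cre, Cmul, RtoC; simpl; ring).
  f_equal. unfold qform. rewrite <- csum_mull. apply csum_ext; intros i _. rewrite <- csum_mull.
  apply csum_ext; intros j _. apply C_ext; destruct (v i), (v j), (X i j); simpl; ring.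
Qed.
Lemma Nv_vscale n v s : Nv n (fun i => Cmul (RtoC s) (v i)) = s * s * Nv n v.
Proof. unfold Nv. rewrite <- rsum_scal. apply rsum_ext; intros. unfold Cn2; destruct (v i); simpl; ring. Qed.
Lemma Nv_nonneg n v : 0 <= Nv n v.
Proof. apply rsum_nonneg; intros; unfold Cn2; nra. Qed.
Lemma Cn2_le_Nv n v i : (i < n)%nat -> Cn2 (v i) <= Nv n v.
Proof. intros; apply (rsum_single_le n (fun i => Cn2 (v i))); auto; intros; unfold Cn2; nra. Qed.
Lemma Nv_pos n v : (exists i, (i < n)%nat /\ v i <> C0) -> 0 < Nv n v.
Proof.
  intros [i [Hi Hv]]. assert (0 < Cn2 (v i)).
  { unfold Cn2. destruct (v i) as [a b] eqn:E. simpl.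
    destruct (Req_dec a 0); destruct (Req_dec b 0); subst; try nra. exfalso; apply Hv; reflexivity. }
  pose proof (Cn2_le_Nv n v i Hi); lra.
Qed.
Lemma Q_Id n v : Q n (Id n) v = Nv n v.
Proof.
  unfold Q, qform, Nv. rewrite Cre_csum. apply rsum_ext; intros i Hi.
  rewrite (csum_single n _ i Hi).
  - unfold Id. rewrite Nat.eqb_refl. unfold Cn2; destruct (v i); simpl; ring.
  - intros k Hk Hki. unfold Id. destruct (Nat.eqb_spec i k). lia. apply C_ext; simpl; ring.
Qed.

Lemma Herm_madd n X Y : Herm n X -> Herm n Y -> Herm n (madd X Y).
Proof. intros H1 H2 i j Hi Hj. unfold madd. rewrite H1, H2, Cconj_add, ?Cconj_invol; auto. Qed.
Lemma Herm_msub n X Y : Herm n X -> Herm n Y -> Herm n (msub X Y).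
Proof. intros H1 H2 i j Hi Hj. unfold msub. rewrite H1, H2, Cconj_add, Cconj_opp, ?Cconj_invol; auto. Qed.
Lemma Herm_mscale n t X : Herm n X -> Herm n (mscale t X).
Proof. intros H1 i j Hi Hj. unfold mscale. rewrite H1, Cconj_mul, Cconj_RtoC, ?Cconj_invol; auto. Qed.
Lemma Herm_Id n : Herm n (Id n).
Proof. intros i j Hi Hj. unfold Id. rewrite Nat.eqb_sym. destruct (Nat.eqb j i); apply C_ext; simpl; ring. Qed.
Lemma Herm_ext n X Y : agree n X Y -> Herm n X -> Herm n Y.
Proof. intros E H i j Hi Hj. rewrite <- !E by auto. apply H; auto. Qed.
Lemma agree_sym n X Y : agree n X Y -> agree n Y X.
Proof. intros H i j Hi Hj; symmetry; auto. Qed.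
Lemma PSD_ext n X Y : agree n X Y -> PSD n X -> PSD n Y.
Proof. intros E [H1 H2]. split. eapply Herm_ext; eauto. intros v. fold (Q n Y v). rewrite <- (Q_ext n X Y); auto. apply H2. Qed.
Lemma PD_ext n X Y : agree n X Y -> PD n X -> PD n Y.
Proof. intros E [H1 H2]. split. eapply Herm_ext; eauto. intros v Hv. fold (Q n Y v). rewrite <- (Q_ext n X Y); auto. apply H2; auto. Qed.
Lemma PSD_Q n X v : PSD n X -> 0 <= Q n X v.
Proof. intros [_ H]; apply H. Qed.
Lemma PSD_intro n X : Herm n X -> (forall v, 0 <= Q n X v) -> PSD n X.
Proof. intros; split; auto. Qed.
Lemma PD_intro n X : Herm n X -> (forall v, 0 < Nv n v -> 0 < Q n X v) -> PD n X.
Proof. intros H1 H2; split; auto. intros v Hv; apply H2, Nv_pos; auto. Qed.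

Lemma qform_zero_v n X v : (forall i, (i < n)%nat -> v i = C0) -> qform n X v = C0.
Proof.
  intros H. unfold qform. rewrite csum_ext with (g := fun _ => C0). apply csum_zero.
  intros i Hi. rewrite csum_ext with (g := fun _ => C0). apply csum_zero. intros j Hj. rewrite !H by auto.
  apply C_ext; simpl; ring.
Qed.
Lemma PD_PSD n X : PD n X -> PSD n X.
Proof.
  intros [H1 H2]. split; auto. intros v.
  destruct (classic (exists i, (i < n)%nat /\ v i <> C0)) as [E|E].
  - apply Rlt_le, H2, E.
  - rewrite qform_zero_v. simpl; lra. intros i Hi. apply NNPP; intro; apply E; eauto.
Qed.
Record good (n m : nat) (F : Map) : Prop := {
  g_herm : forall X, Herm n X -> Herm m (F X);
  g_ext : forall X Y, Herm n X -> agree n X Y -> agree m (F X) (F Y);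
  g_lin : forall X Y s t, Herm n X -> Herm n Y ->
     agree m (F (madd (mscale s X) (mscale t Y))) (madd (mscale s (F X)) (mscale t (F Y)));
  g_psd : forall X, PSD n X -> PSD m (F X) }.

Lemma cmul_sum_l n a f b : Cmul (Cmul a (csum n f)) b = csum n (fun k => Cmul (Cmul a (f k)) b).
Proof. rewrite <- csum_mull, <- csum_mulr. reflexivity. Qed.
Lemma cmul_sum_2 n p f x g : Cmul (Cmul (csum n f) x) (csum p g) =
   csum n (fun i => csum p (fun j => Cmul (Cmul (f i) x) (g j))).
Proof.
  rewrite <- csum_mulr. rewrite <- csum_mulr. apply csum_ext; intros i _. rewrite <- csum_mull. reflexivity.
Qed.

Lemma conjug_lin n T X Y s t i j :
  conjug n T (madd (mscale s X) (mscale t Y)) i j =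
  Cadd (Cmul (RtoC s) (conjug n T X i j)) (Cmul (RtoC t) (conjug n T Y i j)).
Proof.
  unfold conjug. rewrite <- !csum_mull, <- csum_add. apply csum_ext; intros k _.
  rewrite <- !csum_mull, <- csum_add. apply csum_ext; intros l _. unfold madd, mscale. ring.
Qed.
Lemma conjug_ext n T X Y i j : agree n X Y -> conjug n T X i j = conjug n T Y i j.
Proof. intros H. unfold conjug. apply csum_ext; intros k Hk; apply csum_ext; intros l Hl. rewrite H; auto. Qed.
Lemma conjug_herm n T X i j : Herm n X -> conjug n T X i j = Cconj (conjug n T X j i).
Proof.
  intros H. unfold conjug. rewrite csum_conj. rewrite csum_swap. apply csum_ext; intros k Hk.
  rewrite csum_conj. apply csum_ext; intros l Hl. rewrite H by auto.
  rewrite !Cconj_mul, !Cconj_invol. ring.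
Qed.
Lemma conjug_qform n m T X v :
  qform m (conjug n T X) v = qform n X (fun l => csum m (fun j => Cmul (Cconj (T j l)) (v j))).
Proof.
  unfold qform at 1. unfold conjug.
  transitivity (csum m (fun i => csum m (fun j => csum n (fun k => csum n (fun l =>
     Cmul (Cmul (Cmul (T i k) (Cconj (v i))) (X k l)) (Cmul (Cconj (T j l)) (v j))))))).
  { apply csum_ext; intros i _; apply csum_ext; intros j _. rewrite cmul_sum_l. apply csum_ext; intros k _.
    rewrite cmul_sum_l. apply csum_ext; intros l _. ring. }
  unfold qform.
  set (F := fun i j k l => Cmul (Cmul (Cmul (T i k) (Cconj (v i))) (X k l)) (Cmul (Cconj (T j l)) (v j))).
  change (csum m (fun i => csum m (fun j => csum n (fun k => csum n (fun l => F i j k l))))) with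
    (csum m (fun i => csum m (fun j => csum n (fun k => csum n (fun l => F i j k l))))).
  transitivity (csum n (fun k => csum n (fun l => csum m (fun i => csum m (fun j => F i j k l))))).
  { transitivity (csum m (fun i => csum n (fun k => csum m (fun j => csum n (fun l => F i j k l))))).
    { apply csum_ext; intros i _. apply (csum_swap m n (fun j k => csum n (fun l => F i j k l))). }
    rewrite (csum_swap m n (fun i k => csum m (fun j => csum n (fun l => F i j k l)))).
    apply csum_ext; intros k _.
    transitivity (csum m (fun i => csum n (fun l => csum m (fun j => F i j k l)))).
    { apply csum_ext; intros i _. apply (csum_swap m n (fun j l => F i j k l)). }
    apply (csum_swap m n (fun i l => csum m (fun j => F i j k l))). }
  unfold F.
  apply csum_ext; intros k _; apply csum_ext; intros l _.
  rewrite csum_conj. rewrite cmul_sum_2. apply csum_ext; intros i _; apply csum_ext; intros j _.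
  rewrite Cconj_mul, Cconj_invol. ring.
Qed.

Lemma qform_zeroM n v : qform n (fun _ _ => C0) v = C0.
Proof.
  unfold qform. rewrite csum_ext with (g := fun _ => C0). apply csum_zero.
  intros i Hi. rewrite csum_ext with (g := fun _ => C0). apply csum_zero. intros; ring.
Qed.
Lemma good_zero n m : good n m (fun _ _ _ => C0).
Proof.
  constructor.
  - intros X _ i j _ _. apply C_ext; simpl; ring.
  - intros; intros i j _ _; auto.
  - intros X Y s t _ _ i j _ _. unfold madd, mscale. apply C_ext; simpl; ring.
  - intros X _. split. intros i j _ _. apply C_ext; simpl; ring. intros v. rewrite qform_zeroM. simpl; lra.
Qed.
Lemma good_add n m F G : good n m F -> good n m G -> good n m (map_add F G).
Proof.
  intros [F1 F2 F3 F4] [G1 G2 G3 G4]. unfold map_add. constructor.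
  - intros; apply Herm_madd; auto.
  - intros X Y H E i j Hi Hj. unfold madd. rewrite F2 with (Y:=Y), G2 with (Y:=Y); auto.
  - intros X Y s t HX HY i j Hi Hj. unfold madd at 1. rewrite F3, G3; auto. unfold madd, mscale. ring.
  - intros X H. apply PSD_intro. apply Herm_madd; [apply F1|apply G1]; apply H.
    intros v. rewrite Q_madd. pose proof (PSD_Q _ _ v (F4 X H)); pose proof (PSD_Q _ _ v (G4 X H)). lra.
Qed.
Lemma good_conjug n m T : good n m (conjug n T).
Proof.
  constructor.
  - intros X H i j _ _. apply conjug_herm; auto.
  - intros X Y _ E i j _ _. apply conjug_ext; auto.
  - intros X Y s t _ _ i j _ _. rewrite conjug_lin. reflexivity.
  - intros X H. split. intros i j _ _. apply conjug_herm, H.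
    intros v. rewrite conjug_qform. apply H.
Qed.
Lemma kraus_good n m Ts : good n m (kraus_sum n Ts).
Proof.
  induction Ts as [|T Ts IH]; simpl. apply good_zero.
  apply (good_add n m (conjug n T) (kraus_sum n Ts)); auto. apply good_conjug.
Qed.
Lemma CP_good n m F : is_CP n m F -> good n m F.
Proof.
  intros [Ts HT]. destruct (kraus_good n m Ts) as [K1 K2 K3 K4]. constructor.
  - intros X H. apply Herm_ext with (kraus_sum n Ts X); auto. intros i j Hi Hj; rewrite HT; auto.
  - intros X Y H E i j Hi Hj. assert (Herm n Y) by (eapply Herm_ext; eauto).
    rewrite !HT; auto. apply K2; auto.
  - intros X Y s t HX HY i j Hi Hj. rewrite HT; auto. rewrite K3; auto. unfold madd, mscale. rewrite !HT; auto.
    apply Herm_madd; apply Herm_mscale; auto.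
  - intros X H. apply PSD_ext with (kraus_sum n Ts X). intros i j Hi Hj; rewrite HT; auto. apply H. auto.
Qed.

Lemma g_scale n m F X s : good n m F -> Herm n X -> agree m (F (mscale s X)) (mscale s (F X)).
Proof.
  intros G H i j Hi Hj.
  rewrite (g_ext _ _ _ G (mscale s X) (madd (mscale s X) (mscale 0 X))); auto.
  rewrite (g_lin _ _ _ G); auto. unfold madd, mscale. apply C_ext; simpl; ring.
  apply Herm_mscale; auto. intros a b _ _; unfold madd, mscale; apply C_ext; simpl; ring.
Qed.
Lemma g_add n m F X Y : good n m F -> Herm n X -> Herm n Y -> agree m (F (madd X Y)) (madd (F X) (F Y)).
Proof.
  intros G H1 H2 i j Hi Hj.
  rewrite (g_ext _ _ _ G (madd X Y) (madd (mscale 1 X) (mscale 1 Y))); auto.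
  rewrite (g_lin _ _ _ G); auto. unfold madd, mscale. apply C_ext; simpl; ring.
  apply Herm_madd; auto. intros a b _ _; unfold madd, mscale; apply C_ext; simpl; ring.
Qed.
Lemma g_sub n m F X Y : good n m F -> Herm n X -> Herm n Y -> agree m (F (msub X Y)) (msub (F X) (F Y)).
Proof.
  intros G H1 H2 i j Hi Hj.
  rewrite (g_ext _ _ _ G (msub X Y) (madd (mscale 1 X) (mscale (-1) Y))); auto.
  rewrite (g_lin _ _ _ G); auto. unfold madd, msub, mscale. apply C_ext; simpl; ring.
  apply Herm_msub; auto. intros a b _ _; unfold madd, msub, mscale; apply C_ext; simpl; ring.
Qed.
Lemma g_Q_scale n m F X s v : good n m F -> Herm n X -> Q m (F (mscale s X)) v = s * Q m (F X) v.
Proof. intros G H. rewrite (Q_ext m _ (mscale s (F X))). apply Q_mscale. apply (g_scale n); auto. Qed.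
Lemma g_Q_add n m F X Y v : good n m F -> Herm n X -> Herm n Y -> Q m (F (madd X Y)) v = Q m (F X) v + Q m (F Y) v.
Proof. intros G H H'. rewrite (Q_ext m _ (madd (F X) (F Y))). apply Q_madd. apply (g_add n); auto. Qed.
Lemma g_Q_sub n m F X Y v : good n m F -> Herm n X -> Herm n Y -> Q m (F (msub X Y)) v = Q m (F X) v - Q m (F Y) v.
Proof. intros G H H'. rewrite (Q_ext m _ (msub (F X) (F Y))). apply Q_msub. apply (g_sub n); auto. Qed.
Lemma Rabs0 x : Rabs x = 0 -> x = 0.
Proof. unfold Rabs; destruct (Rcase_abs x); lra. Qed.
Definition e1 (i : nat) (a : CC) : nat -> CC := fun k => if Nat.eqb k i then a else C0.
Definition e2 (i j : nat) (a b : CC) : nat -> CC :=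
  fun k => if Nat.eqb k i then a else if Nat.eqb k j then b else C0.

Lemma row_zero n X v k : v k = C0 -> csum n (fun l => Cmul (Cmul (Cconj (v k)) (X k l)) (v l)) = C0.
Proof. intros H. rewrite H, Cconj_C0. rewrite csum_ext with (g := fun _ => C0). apply csum_zero. intros; ring. Qed.

Lemma qform_e1 n X i a : (i < n)%nat -> qform n X (e1 i a) = Cmul (Cmul (Cconj a) (X i i)) a.
Proof.
  intros Hi. unfold qform. rewrite (csum_single n _ i Hi).
  - rewrite (csum_single n _ i Hi). unfold e1; rewrite Nat.eqb_refl; auto.
    intros k _ Hk. unfold e1. destruct (Nat.eqb_spec k i); [lia|]. ring.
  - intros k _ Hk. apply row_zero. unfold e1. destruct (Nat.eqb_spec k i); [lia|]. auto.
Qed.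
Lemma qform_e2 n X i j a b : (i < n)%nat -> (j < n)%nat -> i <> j ->
  qform n X (e2 i j a b) = Cadd (Cadd (Cmul (Cmul (Cconj a) (X i i)) a) (Cmul (Cmul (Cconj a) (X i j)) b))
                                (Cadd (Cmul (Cmul (Cconj b) (X j i)) a) (Cmul (Cmul (Cconj b) (X j j)) b)).
Proof.
  intros Hi Hj Hij.
  assert (Ei : e2 i j a b i = a) by (unfold e2; rewrite Nat.eqb_refl; auto).
  assert (Ej : e2 i j a b j = b) by (unfold e2; destruct (Nat.eqb_spec j i); [lia|]; rewrite Nat.eqb_refl; auto).
  assert (Ek : forall k, k <> i -> k <> j -> e2 i j a b k = C0).
  { intros k H1 H2. unfold e2. destruct (Nat.eqb_spec k i); [lia|]. destruct (Nat.eqb_spec k j); [lia|]. auto. }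
  unfold qform. rewrite (csum_two n _ i j Hi Hj Hij).
  - rewrite !(csum_two n _ i j Hi Hj Hij). rewrite Ei, Ej. reflexivity.
    all: intros k _ H1 H2; rewrite (Ek k H1 H2); ring.
  - intros k _ H1 H2. apply row_zero. auto.
Qed.

Lemma PSD_diag n X i : PSD n X -> (i < n)%nat -> 0 <= Cre (X i i) /\ Cim (X i i) = 0.
Proof.
  intros [H1 H2] Hi. split.
  - pose proof (H2 (e1 i C1)). rewrite qform_e1 in H by auto. destruct (X i i); simpl in *; lra.
  - pose proof (H1 i i Hi Hi). destruct (X i i); simpl in *. injection H; lra.
Qed.
Lemma PSD_offdiag n X i j : PSD n X -> (i < n)%nat -> (j < n)%nat ->
  Rabs (Cre (X i j)) <= (Cre (X i i) + Cre (X j j)) / 2 /\ Rabs (Cim (X i j)) <= (Cre (X i i) + Cre (X j j)) / 2.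
Proof.
  intros HP Hi Hj. destruct (Nat.eq_dec i j) as [<-|Hij].
  - destruct (PSD_diag n X i HP Hi). rewrite H0, Rabs_R0, Rabs_pos_eq by auto. lra.
  - destruct HP as [H1 H2]. pose proof (H1 j i Hj Hi) as Hji.
    pose proof (H2 (e2 i j C1 C1)) as Q1. pose proof (H2 (e2 i j C1 (Copp C1))) as Q2.
    pose proof (H2 (e2 i j C1 (0,1))) as Q3. pose proof (H2 (e2 i j C1 (0,-1))) as Q4.
    rewrite qform_e2 in Q1, Q2, Q3, Q4 by auto. rewrite Hji in Q1, Q2, Q3, Q4.
    destruct (X i j) as [p q], (X i i) as [a b], (X j j) as [c d]. simpl in *.
    split; apply Rabs_le; split; lra.
Qed.

Lemma trace_re n X : Cre (trace n X) = rsum n (fun i => Cre (X i i)).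
Proof. unfold trace; apply Cre_csum. Qed.
Lemma trace_im n X : PSD n X -> Cim (trace n X) = 0.
Proof.
  intros H. unfold trace; rewrite Cim_csum. rewrite rsum_ext with (g := fun _ => 0).
  clear. induction n; simpl; lra. intros i Hi. apply (PSD_diag n X i H Hi).
Qed.
Lemma PSD1_diag_le n X i : PSD1 n X -> (i < n)%nat -> Cre (X i i) <= 1.
Proof.
  intros [HP HT] Hi. assert (Cre (trace n X) = 1) by (rewrite HT; reflexivity).
  rewrite trace_re in H. rewrite <- H. apply (rsum_single_le n (fun i => Cre (X i i))); auto.
  intros; apply (PSD_diag n X k HP); auto.
Qed.
Lemma PSD1_bound n X i j : PSD1 n X -> (i < n)%nat -> (j < n)%nat ->
  Rabs (Cre (X i j)) <= 1 /\ Rabs (Cim (X i j)) <= 1.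
Proof.
  intros HP Hi Hj. pose proof (PSD1_diag_le n X i HP Hi). pose proof (PSD1_diag_le n X j HP Hj).
  destruct (PSD_offdiag n X i j (proj1 HP) Hi Hj). lra.
Qed.
Lemma PSD_trace_pos n X : PSD n X -> nonzero n X -> 0 < Cre (trace n X).
Proof.
  intros HP [i [j [Hi [Hj Hne]]]]. rewrite trace_re.
  assert (Hd : forall k, (k < n)%nat -> 0 <= Cre (X k k)) by (intros; apply (PSD_diag n X k HP); auto).
  destruct (Rle_lt_dec (Cre (X i i) + Cre (X j j)) 0).
  - exfalso. destruct (PSD_offdiag n X i j HP Hi Hj). apply Hne.
    pose proof (Hd i Hi); pose proof (Hd j Hj).
    pose proof (Rabs_pos (Cre (X i j))); pose proof (Rabs_pos (Cim (X i j))).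
    assert (Rabs (Cre (X i j)) = 0) by lra. assert (Rabs (Cim (X i j)) = 0) by lra.
    apply C_ext; simpl; [apply Rabs0|apply Rabs0]; auto.
  - destruct (Nat.eq_dec i j). subst.
    pose proof (rsum_single_le n (fun k => Cre (X k k)) j Hd Hj). simpl in *; lra.
    assert (Cre (X i i) + Cre (X j j) <= rsum n (fun k => Cre (X k k))).
    { clear -Hd Hi Hj n0. induction n. lia. simpl.
      destruct (Nat.eq_dec i n) as [->|]. 
      - assert (Cre (X j j) <= rsum n (fun k => Cre (X k k))) by (apply (rsum_single_le n (fun k => Cre (X k k)) j); [intros; apply Hd; lia| lia]). lra.
      - destruct (Nat.eq_dec j n) as [->|].
        + assert (Cre (X i i) <= rsum n (fun k => Cre (X k k))) by (apply (rsum_single_le n (fun k => Cre (X k k)) i); [intros; apply Hd; lia| lia]). lra.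
        + assert (Cre (X i i) + Cre (X j j) <= rsum n (fun k => Cre (X k k))) by (apply IHn; [lia|lia|intros; apply Hd; lia]).
          pose proof (Hd n ltac:(lia)). lra. }
    lra.
Qed.
Lemma trace_mscale n s X : trace n (mscale s X) = Cmul (RtoC s) (trace n X).
Proof. unfold trace, mscale. rewrite csum_mull. reflexivity. Qed.
Lemma PSD_mscale n s X : 0 <= s -> PSD n X -> PSD n (mscale s X).
Proof.
  intros Hs HP. apply PSD_intro. apply Herm_mscale, HP. intros v. rewrite Q_mscale.
  pose proof (PSD_Q n X v HP). nra.
Qed.
Lemma normalize n X : PSD n X -> nonzero n X ->
  exists c, 0 < c /\ PSD1 n (mscale (/ c) X).
Proof.
  intros HP HZ. pose proof (PSD_trace_pos n X HP HZ). exists (Cre (trace n X)). split; auto.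
  split. apply PSD_mscale; auto. left; apply Rinv_0_lt_compat; auto.
  rewrite trace_mscale. pose proof (trace_im n X HP). destruct (trace n X) as [a b]. simpl in *.
  subst. apply C_ext; simpl; field; lra.
Qed.
Lemma Rabs_le_inv x a : Rabs x <= a -> - a <= x <= a.
Proof. unfold Rabs; destruct (Rcase_abs x); lra. Qed.
Definition Kn (n : nat) (M : Mat) : R :=
  rsum n (fun i => rsum n (fun j => Rabs (Cre (M i j)) + Rabs (Cim (M i j)))).

Lemma Rabs_rsum n f : Rabs (rsum n f) <= rsum n (fun i => Rabs (f i)).
Proof. induction n; simpl. rewrite Rabs_R0; lra. eapply Rle_trans. apply Rabs_triang. lra. Qed.

Lemma term_bound (a z b : CC) :
  Rabs (Cre (Cmul (Cmul (Cconj a) z) b)) <= (Rabs (Cre z) + Rabs (Cim z)) * ((Cn2 a + Cn2 b) / 2).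
Proof.
  destruct a as [a1 a2], z as [z1 z2], b as [b1 b2]. unfold Cn2; simpl.
  replace ((a1 * z1 - - a2 * z2) * b1 - (a1 * z2 + - a2 * z1) * b2) with (z1 * (a1 * b1 + a2 * b2) + z2 * (a2 * b1 - a1 * b2)) by ring.
  assert (Rabs (a1 * b1 + a2 * b2) <= (a1 * a1 + a2 * a2 + (b1 * b1 + b2 * b2)) / 2) by (apply Rabs_le; pose proof (Rle_0_sqr (a1-b1)); pose proof (Rle_0_sqr (a2-b2)); pose proof (Rle_0_sqr (a1+b1)); pose proof (Rle_0_sqr (a2+b2)); pose proof (Rle_0_sqr (a2-b1)); pose proof (Rle_0_sqr (a1-b2)); pose proof (Rle_0_sqr (a2+b1)); pose proof (Rle_0_sqr (a1+b2)); unfold Rsqr in *; split; lra).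
  assert (Rabs (a2 * b1 - a1 * b2) <= (a1 * a1 + a2 * a2 + (b1 * b1 + b2 * b2)) / 2) by (apply Rabs_le; pose proof (Rle_0_sqr (a1-b1)); pose proof (Rle_0_sqr (a2-b2)); pose proof (Rle_0_sqr (a1+b1)); pose proof (Rle_0_sqr (a2+b2)); pose proof (Rle_0_sqr (a2-b1)); pose proof (Rle_0_sqr (a1-b2)); pose proof (Rle_0_sqr (a2+b1)); pose proof (Rle_0_sqr (a1+b2)); unfold Rsqr in *; split; lra).
  eapply Rle_trans. apply Rabs_triang. rewrite !Rabs_mult.
  pose proof (Rabs_pos z1); pose proof (Rabs_pos z2). nra.
Qed.

Lemma Q_bound n M v : Rabs (Q n M v) <= Kn n M * Nv n v.
Proof.
  unfold Q, qform, Kn. rewrite Cre_csum. eapply Rle_trans. apply Rabs_rsum.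
  rewrite Rmult_comm, <- rsum_scal. apply rsum_le; intros i Hi.
  rewrite Cre_csum. eapply Rle_trans. apply Rabs_rsum.
  rewrite <- rsum_scal. apply rsum_le; intros j Hj.
  eapply Rle_trans. apply term_bound.
  pose proof (Cn2_le_Nv n v i Hi); pose proof (Cn2_le_Nv n v j Hj).
  pose proof (Rabs_pos (Cre (M i j))); pose proof (Rabs_pos (Cim (M i j))). nra.
Qed.

Definition cb (n : nat) : R := 2 * INR n * INR n.
Lemma K_PSD1 n X : PSD1 n X -> Kn n X <= cb n.
Proof.
  intros H. unfold Kn, cb.
  replace (2 * INR n * INR n) with (rsum n (fun _ => rsum n (fun _ => 2))).
  apply rsum_le; intros i Hi; apply rsum_le; intros j Hj. destruct (PSD1_bound n X i j H Hi Hj). lra.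
  rewrite rsum_const, rsum_const. ring.
Qed.
Lemma cb_nonneg n : 0 <= cb n.
Proof. unfold cb. pose proof (pos_INR n). nra. Qed.
Lemma PSD1_le_cId n X : PSD1 n X -> PSD n (msub (mscale (cb n) (Id n)) X).
Proof.
  intros H. apply PSD_intro. apply Herm_msub. apply Herm_mscale, Herm_Id. apply H.
  intros v. rewrite Q_msub, Q_mscale, Q_Id.
  pose proof (Q_bound n X v). pose proof (K_PSD1 n X H). pose proof (Nv_nonneg n v).
  apply Rabs_le_inv in H0. nra.
Qed.
Definition incr (phi : nat -> nat) : Prop := forall k, (phi k < phi (S k))%nat.
Lemma incr_ge phi : incr phi -> forall k, (k <= phi k)%nat.
Proof. intros H k. induction k. lia. specialize (H k). lia. Qed.
Lemma incr_mono phi : incr phi -> forall a b, (a <= b)%nat -> (phi a <= phi b)%nat.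
Proof. intros H a b Hab. induction Hab. lia. specialize (H m). lia. Qed.
Lemma incr_comp phi psi : incr phi -> incr psi -> incr (fun k => phi (psi k)).
Proof.
  intros H1 H2 k. pose proof (H2 k). pose proof (incr_mono phi H1 (S (psi k)) (psi (S k)) H).
  specialize (H1 (psi k)). lia.
Qed.
Lemma cv_sub u l phi : (forall k, (k <= phi k)%nat) -> Un_cv u l -> Un_cv (fun k => u (phi k)) l.
Proof.
  intros H Hu eps He. destruct (Hu eps He) as [N HN]. exists N. intros k Hk. apply HN.
  specialize (H k). lia.
Qed.
Lemma cv_nonneg u l : Un_cv u l -> (forall k, 0 <= u k) -> 0 <= l.
Proof.
  intros H Hp. destruct (Rle_lt_dec 0 l); auto. destruct (H (- l)) as [N HN]. lra.
  specialize (HN N (le_n _)). specialize (Hp N). unfold Rdist in HN. apply Rabs_def2 in HN. lra.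
Qed.
Lemma cv_le u l c : Un_cv u l -> (forall k, u k <= c) -> l <= c.
Proof.
  intros H Hp. assert (0 <= c - l); [|lra]. apply (cv_nonneg (fun k => c - u k)).
  apply CV_minus; auto. intros eps He; exists 0%nat; intros; unfold Rdist; rewrite Rminus_diag, Rabs_R0; auto.
  intros k; specialize (Hp k); lra.
Qed.
Lemma cv_const c : Un_cv (fun _ => c) c.
Proof. intros eps He; exists 0%nat; intros; unfold Rdist; rewrite Rminus_diag, Rabs_R0; auto. Qed.

Lemma BW1 (u : nat -> R) M : (forall k, Rabs (u k) <= M) ->
  exists phi, incr phi /\ exists l, Un_cv (fun k => u (phi k)) l.
Proof.
  intros HM.
  destruct (Bolzano_Weierstrass u (fun c => - M <= c <= M) (compact_P3 (- M) M)) as [l Hl].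
  { intros k; apply Rabs_le_inv; auto. }
  assert (Hg : forall N k, exists p, (N <= p)%nat /\ Rabs (u p - l) < / INR (S k)).
  { intros N k. assert (Hp : 0 < / INR (S k)) by (apply Rinv_0_lt_compat, lt_0_INR; lia).
    assert (Hn : neighbourhood (disc l (mkposreal _ Hp)) l) by (exists (mkposreal _ Hp); intros y Hy; auto).
    destruct (Hl (disc l (mkposreal _ Hp)) N Hn) as [p [Hp1 Hp2]].
    exists p; split; auto. }
  set (g := fun N k => proj1_sig (constructive_indefinite_description _ (Hg N k))).
  assert (Hg1 : forall N k, (N <= g N k)%nat /\ Rabs (u (g N k) - l) < / INR (S k)).
  { intros; unfold g; destruct constructive_indefinite_description; auto. }
  set (phi := fix f k := match k with O => g O O | S k' => g (S (f k')) (S k') end).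
  exists phi. split.
  - intros k. simpl. destruct (Hg1 (S (phi k)) (S k)). lia.
  - exists l. intros eps He. destruct (archimed_cor1 eps He) as [N [HN1 HN2]].
    exists N. intros k Hk. unfold Rdist.
    assert (Rabs (u (phi k) - l) < / INR (S k)) by (destruct k; simpl; apply Hg1).
    assert (/ INR (S k) <= / INR N). { apply Rinv_le_contravar. apply lt_0_INR; auto. apply le_INR; lia. }
    lra.
Qed.

Lemma BWlist (I : Type) (l : list I) (u : nat -> I -> R) M :
  (forall k i, In i l -> Rabs (u k i) <= M) ->
  exists phi, incr phi /\ exists L : I -> R, forall i, In i l -> Un_cv (fun k => u (phi k) i) (L i).
Proof.
  induction l as [|a l IH]; intros HM.
  - exists (fun k => k). split. intros k; lia. exists (fun _ => 0). intros i [].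
  - destruct IH as [phi [Hphi [L HL]]]. intros; apply HM; simpl; auto.
    destruct (BW1 (fun k => u (phi k) a) M) as [psi [Hpsi [la Hla]]]. intros; apply HM; simpl; auto.
    exists (fun k => phi (psi k)). split. apply incr_comp; auto.
    exists (fun i => if excluded_middle_informative (i = a) then la else L i).
    intros i Hi. destruct excluded_middle_informative as [->|Hne]. auto.
    destruct Hi as [->|Hi]. congruence.
    apply (cv_sub (fun k => u (phi k) i)). apply incr_ge; auto. apply HL; auto.
Qed.

Definition Ccv (u : nat -> CC) (z : CC) : Prop := Un_cv (fun k => Cre (u k)) (Cre z) /\ Un_cv (fun k => Cim (u k)) (Cim z).
Lemma Ccv_const z : Ccv (fun _ => z) z.
Proof. split; apply cv_const. Qed.
Lemma Ccv_add u v a b : Ccv u a -> Ccv v b -> Ccv (fun k => Cadd (u k) (v k)) (Cadd a b).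
Proof. intros [H1 H2] [H3 H4]. split; simpl; apply CV_plus; auto. Qed.
Lemma Ccv_opp u a : Ccv u a -> Ccv (fun k => Copp (u k)) (Copp a).
Proof. intros [H1 H2]. split; simpl; apply CV_opp; auto. Qed.
Lemma Ccv_mul u v a b : Ccv u a -> Ccv v b -> Ccv (fun k => Cmul (u k) (v k)) (Cmul a b).
Proof.
  intros [H1 H2] [H3 H4]. split; simpl.
  apply CV_minus; apply CV_mult; auto. apply CV_plus; apply CV_mult; auto.
Qed.
Lemma Ccv_conj u a : Ccv u a -> Ccv (fun k => Cconj (u k)) (Cconj a).
Proof. intros [H1 H2]. split; simpl; auto. apply CV_opp; auto. Qed.
Lemma Ccv_RtoC t s : Un_cv t s -> Ccv (fun k => RtoC (t k)) (RtoC s).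
Proof. intros H. split; simpl; auto. apply cv_const. Qed.
Lemma Ccv_csum n (f : nat -> nat -> CC) g :
  (forall i, (i < n)%nat -> Ccv (fun k => f k i) (g i)) -> Ccv (fun k => csum n (f k)) (csum n g).
Proof.
  induction n; intros H; simpl. apply Ccv_const.
  apply Ccv_add. apply IHn; intros; apply H; lia. apply H; lia.
Qed.
Lemma Ccv_unique u a b : Ccv u a -> Ccv u b -> a = b.
Proof. intros [H1 H2] [H3 H4]. apply C_ext. eapply UL_sequence; eauto. eapply UL_sequence; eauto. Qed.

Definition Mcv (n : nat) (M : nat -> Mat) (M0 : Mat) : Prop :=
  forall i j, (i < n)%nat -> (j < n)%nat -> Ccv (fun k => M k i j) (M0 i j).

Lemma Q_cont n M M0 v v0 : Mcv n M M0 -> (forall i, (i < n)%nat -> Ccv (fun k => v k i) (v0 i)) ->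
  Un_cv (fun k => Q n (M k) (v k)) (Q n M0 v0).
Proof.
  intros HM Hv. unfold Q, qform.
  refine (proj1 (Ccv_csum n (fun k i => csum n (fun j => Cmul (Cmul (Cconj (v k i)) (M k i j)) (v k j))) _ _)).
  intros i Hi. apply Ccv_csum. intros j Hj. apply Ccv_mul. apply Ccv_mul. apply Ccv_conj; auto. apply HM; auto. auto.
Qed.
Lemma Nv_cont n v v0 : (forall i, (i < n)%nat -> Ccv (fun k => v k i) (v0 i)) ->
  Un_cv (fun k => Nv n (v k)) (Nv n v0).
Proof.
  intros Hv. unfold Nv. induction n; simpl. apply cv_const.
  apply CV_plus. apply IHn; intros; apply Hv; lia. unfold Cn2. destruct (Hv n (le_n _)).
  apply CV_plus; apply CV_mult; auto.
Qed.
Lemma Ccv_ext u w z : (forall k, u k = w k) -> Ccv w z -> Ccv u z.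
Proof. intros H [H1 H2]. split; eapply Un_cv_ext; eauto; intros; simpl; rewrite H; auto. Qed.
Lemma PSD_closed n M M0 : (forall k, PSD n (M k)) -> Mcv n M M0 -> PSD n M0.
Proof.
  intros HP HM. split.
  - intros i j Hi Hj. apply (Ccv_unique (fun k => M k i j)). auto.
    apply Ccv_ext with (fun k => Cconj (M k j i)). intros k; apply (HP k); auto.
    apply Ccv_conj; auto.
  - intros v. apply (cv_nonneg (fun k => Q n (M k) v)). apply (Q_cont n M M0 (fun _ => v) v); auto.
    intros; apply Ccv_const. intros k; apply PSD_Q, HP.
Qed.
Lemma conjug_cont n m T X Y : Mcv n X Y -> Mcv m (fun k => conjug n T (X k)) (conjug n T Y).
Proof.
  intros H i j Hi Hj. unfold conjug.
  apply (Ccv_csum n (fun k a => csum n (fun b => Cmul (Cmul (T i a) (X k a b)) (Cconj (T j b))))).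
  intros a Ha. apply (Ccv_csum n (fun k b => Cmul (Cmul (T i a) (X k a b)) (Cconj (T j b)))).
  intros b Hb. apply Ccv_mul. apply Ccv_mul. apply Ccv_const. apply H; auto. apply Ccv_const.
Qed.
Lemma kraus_cont n m Ts X Y : Mcv n X Y -> Mcv m (fun k => kraus_sum n Ts (X k)) (kraus_sum n Ts Y).
Proof.
  intros H. induction Ts as [|T Ts IH]; simpl; intros i j Hi Hj.
  apply Ccv_const. unfold madd. apply Ccv_add. apply (conjug_cont n m T X Y); auto. apply IH; auto.
Qed.
Lemma CP_cont n m F X Y : is_CP n m F -> (forall k, Herm n (X k)) -> Herm n Y -> Mcv n X Y ->
  Mcv m (fun k => F (X k)) (F Y).
Proof.
  intros [Ts HT] HX HY H i j Hi Hj. rewrite HT by auto.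
  apply Ccv_ext with (fun k => kraus_sum n Ts (X k) i j). intros; rewrite HT; auto.
  apply (kraus_cont n m Ts X Y); auto.
Qed.
Lemma Mcv_madd n X Y X0 Y0 : Mcv n X X0 -> Mcv n Y Y0 -> Mcv n (fun k => madd (X k) (Y k)) (madd X0 Y0).
Proof. intros H1 H2 i j Hi Hj. apply Ccv_add; auto. Qed.
Lemma Mcv_msub n X Y X0 Y0 : Mcv n X X0 -> Mcv n Y Y0 -> Mcv n (fun k => msub (X k) (Y k)) (msub X0 Y0).
Proof. intros H1 H2 i j Hi Hj. apply Ccv_add; auto. apply Ccv_opp; auto. Qed.
Lemma Mcv_mscale n t t0 X X0 : Un_cv t t0 -> Mcv n X X0 -> Mcv n (fun k => mscale (t k) (X k)) (mscale t0 X0).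
Proof. intros H1 H2 i j Hi Hj. apply Ccv_mul; auto. apply Ccv_RtoC; auto. Qed.
Lemma Mcv_const n X : Mcv n (fun _ => X) X.
Proof. intros i j _ _; apply Ccv_const. Qed.
Lemma cv_le_ev u l c N : Un_cv u l -> (forall k, (N <= k)%nat -> u k <= c) -> l <= c.
Proof.
  intros H Hc. apply (cv_le (fun k => u (k + N)%nat)). apply (cv_sub u l (fun k => (k + N)%nat)); auto; intros; lia.
  intros k; apply Hc; lia.
Qed.
Lemma Nv_pos_ex n v : 0 < Nv n v -> exists i, (i < n)%nat /\ v i <> C0.
Proof.
  intros H. apply NNPP; intros Hn. assert (Nv n v = 0); [|lra].
  unfold Nv. transitivity (rsum n (fun _ => 0)). apply rsum_ext; intros i Hi.
  destruct (classic (v i = C0)) as [E|E]. rewrite E; unfold Cn2; simpl; ring. exfalso; eauto.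
  clear. induction n; simpl; lra.
Qed.

Definition vidx (m : nat) : list (nat * bool) := list_prod (seq 0 m) (true :: false :: nil).
Lemma vidx_in m i b : (i < m)%nat -> In (i, b) (vidx m).
Proof. intros H. unfold vidx. apply in_prod. apply in_seq; lia. destruct b; simpl; auto. Qed.
Definition vcoord (v : nat -> CC) (p : nat * bool) : R := if snd p then Cre (v (fst p)) else Cim (v (fst p)).

Lemma PD_lower m P : PD m P -> exists c, 0 < c /\ forall v, c * Nv m v <= Q m P v.
Proof.
  intros HP. apply NNPP; intros Hne.
  assert (Hk : forall k : nat, exists v, Q m P v < / INR (S k) * Nv m v).
  { intros k. apply NNPP; intros Hk. apply Hne. exists (/ INR (S k)). split.
    apply Rinv_0_lt_compat, lt_0_INR; lia. intros v. apply Rnot_lt_le. intros Hl; apply Hk; eauto. }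
  set (vk := fun k => proj1_sig (constructive_indefinite_description _ (Hk k))).
  assert (Hvk : forall k, Q m P (vk k) < / INR (S k) * Nv m (vk k)).
  { intros; unfold vk; destruct constructive_indefinite_description; auto. }
  assert (HN : forall k, 0 < Nv m (vk k)).
  { intros k. pose proof (Nv_nonneg m (vk k)). destruct H. auto.
    pose proof (Hvk k). rewrite <- H in H0. pose proof (PSD_Q m P (vk k) (PD_PSD m P HP)). lra. }
  set (wk := fun k i => Cmul (RtoC (/ sqrt (Nv m (vk k)))) (vk k i)).
  assert (HNw : forall k, Nv m (wk k) = 1).
  { intros k. specialize (HN k). unfold wk. rewrite Nv_vscale. rewrite <- Rinv_mult, sqrt_sqrt. field. lra. lra. }
  assert (HQw : forall k, Q m P (wk k) < / INR (S k)).
  { intros k. specialize (Hvk k). specialize (HN k). unfold wk. rewrite Q_vscale. rewrite <- Rinv_mult, sqrt_sqrt by lra. apply (Rmult_lt_reg_l (Nv m (vk k))); auto.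
    replace (Nv m (vk k) * (/ Nv m (vk k) * Q m P (vk k))) with (Q m P (vk k)) by (field; lra). lra. }
  destruct (BWlist _ (vidx m) (fun k p => vcoord (wk k) p) 1) as [phi [Hphi [L HL]]].
  { intros k [i b] Hin. unfold vidx in Hin. apply in_prod_iff in Hin. destruct Hin as [Hi _].
    apply in_seq in Hi. pose proof (Cn2_le_Nv m (wk k) i ltac:(lia)). rewrite HNw in H.
    unfold vcoord, Cn2 in *; cbn [snd fst]. apply Rabs_le. destruct b; split; nra. }
  set (w0 := fun i => (L (i, true), L (i, false)) : CC).
  assert (Hcv : forall i, (i < m)%nat -> Ccv (fun k => wk (phi k) i) (w0 i)).
  { intros i Hi. split. apply (HL (i, true)), vidx_in; auto. apply (HL (i, false)), vidx_in; auto. }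
  assert (HN0 : Nv m w0 = 1).
  { apply (UL_sequence (fun k => Nv m (wk (phi k)))). apply Nv_cont; auto.
    eapply Un_cv_ext. 2: apply (cv_const 1). intros; simpl; auto. }
  assert (HQ0 : Q m P w0 <= 0).
  { apply Rnot_lt_le; intros Hlt. destruct (archimed_cor1 _ Hlt) as [N [HN1 HN2]].
    assert (Q m P w0 <= / INR N); [|lra].
    apply (cv_le_ev (fun k => Q m P (wk (phi k))) _ _ N).
    apply (Q_cont m (fun _ => P) P (fun k => wk (phi k)) w0); auto. apply Mcv_const.
    intros k Hk2. left. eapply Rlt_le_trans. apply HQw. apply Rinv_le_contravar. apply lt_0_INR; lia.
    apply le_INR. pose proof (incr_ge phi Hphi k). lia. }
  destruct HP as [_ HP]. assert (0 < Q m P w0); [|lra]. apply HP, Nv_pos_ex. lra.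
Qed.
Definition midx (n : nat) : list (option (nat * nat * bool)) :=
  None :: map Some (list_prod (list_prod (seq 0 n) (seq 0 n)) (true :: false :: nil)).
Lemma midx_in n i j b : (i < n)%nat -> (j < n)%nat -> In (Some (i, j, b)) (midx n).
Proof.
  intros Hi Hj. right. apply in_map. apply in_prod. apply in_prod; apply in_seq; lia. destruct b; simpl; auto.
Qed.
Definition mcoord (X : Mat) (t : R) (p : option (nat * nat * bool)) : R :=
  match p with None => t | Some (i, j, b) => if b then Cre (X i j) else Cim (X i j) end.

Lemma extract n X t T : (forall k, PSD1 n (X k)) -> (forall k, 0 <= t k <= T) ->
  exists phi, incr phi /\ exists Y t0, PSD1 n Y /\ 0 <= t0 <= T /\
    Mcv n (fun k => X (phi k)) Y /\ Un_cv (fun k => t (phi k)) t0.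
Proof.
  intros HX Ht. assert (HT : 0 <= T) by (destruct (Ht 0%nat); lra).
  destruct (BWlist _ (midx n) (fun k p => mcoord (X k) (t k) p) (T + 1)) as [phi [Hphi [L HL]]].
  { intros k p Hin. destruct p as [[[i j] b]|].
    - unfold midx in Hin. destruct Hin as [Hin|Hin]; [discriminate|].
      apply in_map_iff in Hin. destruct Hin as [q [Hq Hin]]. injection Hq; intros; subst q.
      apply in_prod_iff in Hin. destruct Hin as [Hin _]. apply in_prod_iff in Hin. destruct Hin as [Hi Hj].
      apply in_seq in Hi, Hj. destruct (PSD1_bound n (X k) i j (HX k)); try lia.
      simpl. destruct b; lra.
    - simpl. destruct (Ht k). rewrite Rabs_pos_eq; lra. }
  set (Y := fun i j => (L (Some (i, j, true)), L (Some (i, j, false))) : CC).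
  assert (HM : Mcv n (fun k => X (phi k)) Y).
  { intros i j Hi Hj. split. apply (HL (Some (i, j, true))), midx_in; auto. apply (HL (Some (i, j, false))), midx_in; auto. }
  assert (Htc : Un_cv (fun k => t (phi k)) (L None)) by (apply (HL None); left; auto).
  exists phi. split; auto. exists Y, (L None). split; [|split; [|split; auto]].
  - split. apply (PSD_closed n (fun k => X (phi k))); auto. intros; apply HX.
    apply (Ccv_unique (fun k => trace n (X (phi k)))).
    unfold trace. apply (Ccv_csum n (fun k i => X (phi k) i i)). intros; apply HM; auto.
    apply Ccv_ext with (fun _ => C1). intros; apply HX. apply Ccv_const.
  - split. apply (cv_nonneg _ _ Htc). intros; apply Ht. apply (cv_le _ _ _ Htc). intros; apply Ht.
Qed.
Lemma ERle_trans a b c : ERle a b -> ERle b c -> ERle a c.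
Proof. destruct a, b, c; simpl; auto; try lra; tauto. Qed.
Lemma ERle_antisym a b : ERle a b -> ERle b a -> a = b.
Proof. destruct a, b; simpl; try tauto. intros; f_equal; lra. Qed.
Lemma ERle_refl a : ERle a a.
Proof. destruct a; simpl; auto; lra. Qed.

Lemma glb_exists S : (forall e, S e -> ERle (Fin 0) e) -> exists v, is_glb S v.
Proof.
  intros H0. destruct (classic (exists x, S (Fin x))) as [[x Hx]|Hno].
  - destruct (completeness (fun y => S (Fin (- y)))) as [s [Hs1 Hs2]].
    { exists 0. intros y Hy. specialize (H0 _ Hy). simpl in H0. lra. }
    { exists (- x). rewrite Ropp_involutive; auto. }
    exists (Fin (- s)). split.
    + intros [y|] Hy; simpl; auto. assert (- y <= s); [|lra]. apply Hs1. rewrite Ropp_involutive; auto.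
    + intros [a|] Ha; simpl.
      * assert (s <= - a); [|lra]. apply Hs2. intros y Hy. specialize (Ha _ Hy). simpl in Ha. lra.
      * apply (Ha _ Hx).
  - exists Inf. split.
    + intros [y|] Hy; simpl; auto. apply Hno; eauto.
    + intros w _. destruct w; simpl; auto.
Qed.
Lemma einf_glb S : (forall e, S e -> ERle (Fin 0) e) -> is_glb S (einf S).
Proof. intros H. unfold einf. apply epsilon_spec. apply glb_exists; auto. Qed.
Lemma einf_nonneg S : (forall e, S e -> ERle (Fin 0) e) -> ERle (Fin 0) (einf S).
Proof. intros H. apply (proj2 (einf_glb S H)). auto. Qed.
Lemma einf_le S e : (forall e, S e -> ERle (Fin 0) e) -> S e -> ERle (einf S) e.
Proof. intros H He. apply (proj1 (einf_glb S H)); auto. Qed.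
Lemma einf_lt S x q : (forall e, S e -> ERle (Fin 0) e) -> ERle (einf S) (Fin x) -> x < q ->
  exists y, S (Fin y) /\ y < q.
Proof.
  intros H Hx Hq. apply NNPP; intros Hn.
  assert (ERle (Fin q) (einf S)).
  { apply (proj2 (einf_glb S H)). intros [y|] Hy; simpl; auto. apply Rnot_lt_le; intros Hl; apply Hn; eauto. }
  pose proof (ERle_trans _ _ _ H0 Hx). simpl in H1. lra.
Qed.
Lemma einf_mono S S' : (forall e, S e -> ERle (Fin 0) e) -> (forall e, S' e -> ERle (Fin 0) e) ->
  (forall e, S e -> exists e', S' e' /\ ERle e' e) -> ERle (einf S') (einf S).
Proof.
  intros H H' Hm. apply (proj2 (einf_glb S H)). intros e He. destruct (Hm e He) as [e' [He' Hle]].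
  eapply ERle_trans; [|apply Hle]. apply einf_le; auto.
Qed.
Lemma ER_le_all v p : (forall d, 0 < d -> ERle v (Fin (p + d))) -> ERle v (Fin p).
Proof.
  intros H. destruct v as [a|]; simpl.
  - apply Rnot_lt_le; intros Hl. specialize (H ((a - p) / 2) ltac:(lra)). simpl in H. lra.
  - apply (H 1); lra.
Qed.

Definition rset (m : nat) (A B : Map) (X : Mat) (t : R) : Prop :=
  0 <= t /\ PSD m (msub (mscale t (B X)) (A X)).
Lemma r_nonneg_set (m : nat) (A B : Map) (X : Mat) : forall e, (fun e => exists t, e = Fin t /\ 0 <= t /\ PSD m (msub (mscale t (B X)) (A X))) e -> ERle (Fin 0) e.
Proof. intros e [t [-> [H _]]]; simpl; auto. Qed.
Lemma r_val_nonneg (m : nat) (A B : Map) (X : Mat) : ERle (Fin 0) (r_val m A B X).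
Proof. apply einf_nonneg, r_nonneg_set. Qed.
Lemma r_val_le (m : nat) (A B : Map) (X : Mat) t : rset m A B X t -> ERle (r_val m A B X) (Fin t).
Proof. intros [H1 H2]. apply einf_le. apply r_nonneg_set. exists t; auto. Qed.
Lemma r_val_lt (m : nat) (A B : Map) (X : Mat) x q : ERle (r_val m A B X) (Fin x) -> x < q -> exists t, rset m A B X t /\ t < q.
Proof.
  intros H Hq. destruct (einf_lt _ x q (r_nonneg_set m A B X) H Hq) as [y [[t [E [H1 H2]]] Hy]].
  injection E; intros; subst. exists t; split; auto. split; auto.
Qed.
Lemma rho_set_nonneg (n m : nat) (A B : Map) : forall e, (fun e => exists X, PD n X /\ e = r_val m A B X) e -> ERle (Fin 0) e.
Proof. intros e [X [_ ->]]. apply r_val_nonneg. Qed.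
Lemma rhohat_set_nonneg (n m : nat) (A B : Map) : forall e, (fun e => exists X, PSD n X /\ nonzero n X /\ e = r_val m A B X) e -> ERle (Fin 0) e.
Proof. intros e [X [_ [_ ->]]]. apply r_val_nonneg. Qed.
Lemma rho_le (n m : nat) (A B : Map) (X : Mat) : PD n X -> ERle (rho n m A B) (r_val m A B X).
Proof. intros H. apply einf_le. apply rho_set_nonneg. eauto. Qed.
Lemma rhohat_le (n m : nat) (A B : Map) (X : Mat) : PSD n X -> nonzero n X -> ERle (rhohat n m A B) (r_val m A B X).
Proof. intros H H'. apply einf_le. apply rhohat_set_nonneg. eauto. Qed.
Lemma rho_nonneg (n m : nat) (A B : Map) : ERle (Fin 0) (rho n m A B).
Proof. apply einf_nonneg, rho_set_nonneg. Qed.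
Lemma rhohat_nonneg (n m : nat) (A B : Map) : ERle (Fin 0) (rhohat n m A B).
Proof. apply einf_nonneg, rhohat_set_nonneg. Qed.
Lemma rho_lt (n m : nat) (A B : Map) x q : ERle (rho n m A B) (Fin x) -> x < q ->
  exists X t, PD n X /\ rset m A B X t /\ t < q.
Proof.
  intros H Hq. destruct (einf_lt _ x q (rho_set_nonneg n m A B) H Hq) as [y [[X [HX E]] Hy]].
  destruct (r_val_lt m A B X y q) as [t [Ht Htq]]. rewrite <- E; simpl; lra. auto. eauto.
Qed.
Lemma rhohat_lt (n m : nat) (A B : Map) x q : ERle (rhohat n m A B) (Fin x) -> x < q ->
  exists X t, PSD n X /\ nonzero n X /\ rset m A B X t /\ t < q.
Proof.
  intros H Hq. destruct (einf_lt _ x q (rhohat_set_nonneg n m A B) H Hq) as [y [[X [HX [HZ E]]] Hy]].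
  destruct (r_val_lt m A B X y q) as [t [Ht Htq]]. rewrite <- E; simpl; lra. auto. eauto 10.
Qed.
Lemma rset_Q m A B X t v : rset m A B X t -> Q m (A X) v <= t * Q m (B X) v.
Proof. intros [_ H]. pose proof (PSD_Q _ _ v H). rewrite Q_msub, Q_mscale in H0. lra. Qed.
Lemma rset_intro n m A B X t : good n m A -> good n m B -> Herm n X -> 0 <= t ->
  (forall v, Q m (A X) v <= t * Q m (B X) v) -> rset m A B X t.
Proof.
  intros GA GB HX Ht H. split; auto. apply PSD_intro.
  apply Herm_msub. apply Herm_mscale. apply (g_herm _ _ _ GB); auto. apply (g_herm _ _ _ GA); auto.
  intros v. rewrite Q_msub, Q_mscale. specialize (H v). lra.
Qed.
Lemma rset_scale n m A B X t s : good n m A -> good n m B -> Herm n X -> 0 < s ->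
  rset m A B X t -> rset m A B (mscale s X) t.
Proof.
  intros GA GB HX Hs H. apply (rset_intro n); auto. apply Herm_mscale; auto. apply H.
  intros v. rewrite (g_Q_scale n m A), (g_Q_scale n m B); auto. pose proof (rset_Q _ _ _ _ _ v H). nra.
Qed.
Lemma PD_Q_pos m P v : PD m P -> 0 < Nv m v -> 0 < Q m P v.
Proof. intros [_ H] Hv. apply H, Nv_pos_ex; auto. Qed.
Lemma PSD_eps_PD n Y e : PSD n Y -> 0 < e -> PD n (madd Y (mscale e (Id n))).
Proof.
  intros HY He. apply PD_intro. apply Herm_madd. apply HY. apply Herm_mscale, Herm_Id.
  intros v Hv. rewrite Q_madd, Q_mscale, Q_Id. pose proof (PSD_Q n Y v HY). nra.
Qed.
Lemma Id_PD n : PD n (Id n).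
Proof. apply PD_intro. apply Herm_Id. intros v Hv. rewrite Q_Id; auto. Qed.
Lemma PD_nonzero n X : (1 <= n)%nat -> PD n X -> nonzero n X.
Proof.
  intros Hn HX. exists 0%nat, 0%nat. split; [lia|split; [lia|]]. intros E.
  destruct HX as [_ HX]. specialize (HX (e1 0 C1)). rewrite qform_e1 in HX by lia. rewrite E in HX.
  assert (0 < Cre (Cmul (Cmul (Cconj C1) C0) C1)) as HH. apply HX. exists 0%nat. split. lia. unfold e1; simpl. intros H; injection H; lra. simpl in HH; lra.
Qed.
Lemma PSD1_nonzero n X : PSD1 n X -> nonzero n X.
Proof.
  intros [HP HT]. apply NNPP; intros Hn.
  assert (trace n X = C0).
  { unfold trace. rewrite csum_ext with (g := fun _ => C0). apply csum_zero.
    intros i Hi. apply NNPP; intros Hne. apply Hn. exists i, i. auto. }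
  rewrite HT in H. injection H; lra.
Qed.
Lemma PSD1_PSD n X : PSD1 n X -> PSD n X.
Proof. intros [H _]; auto. Qed.

Lemma core4 n m A B Y t0 d : good n m A -> good n m B -> PSD n Y -> PD m (B Y) ->
  rset m A B Y t0 -> 0 < d -> ERle (rho n m A B) (Fin (t0 + d)).
Proof.
  intros GA GB HY HBY Hr Hd. destruct (PD_lower m (B Y) HBY) as [c [Hc HcQ]].
  set (K := Kn m (msub (mscale (t0 + d) (B (Id n))) (A (Id n)))).
  assert (HK : 0 <= K).
  { unfold K, Kn. apply rsum_nonneg; intros; apply rsum_nonneg; intros. pose proof (Rabs_pos (Cre (msub (mscale (t0 + d) (B (Id n))) (A (Id n)) i i0))). pose proof (Rabs_pos (Cim (msub (mscale (t0 + d) (B (Id n))) (A (Id n)) i i0))). lra. }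
  set (e := d * c / (K + 1)).
  assert (He : 0 < e) by (unfold e; apply Rdiv_lt_0_compat; nra).
  assert (HeK : e * K <= d * c).
  { unfold e. apply (Rmult_le_reg_r (K + 1)). lra. field_simplify; try lra. nra. }
  set (X := madd Y (mscale e (Id n))).
  assert (HX : PD n X) by (apply PSD_eps_PD; auto).
  eapply ERle_trans. apply (rho_le n m A B X HX). apply r_val_le.
  assert (Ht0 : 0 <= t0) by apply Hr.
  assert (HYh : Herm n Y) by apply HY. assert (HIh : Herm n (mscale e (Id n))) by (apply Herm_mscale, Herm_Id).
  apply (rset_intro n); auto. apply Herm_madd; auto. lra.
  intros v. unfold X. rewrite (g_Q_add n m A), (g_Q_add n m B); auto.
  rewrite (g_Q_scale n m A), (g_Q_scale n m B); auto using Herm_Id.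
  pose proof (rset_Q _ _ _ _ _ v Hr). pose proof (HcQ v).
  pose proof (Q_bound m (msub (mscale (t0 + d) (B (Id n))) (A (Id n))) v). fold K in H1.
  rewrite Q_msub, Q_mscale in H1. apply Rabs_le_inv in H1. pose proof (Nv_nonneg m v).
  assert (e * (K * Nv m v) <= d * (c * Nv m v)) by nra. nra.
Qed.

Lemma r_mono n m A B A1 B1 X : good n m A -> good n m B -> good n m A1 -> good n m B1 -> Herm n X ->
  (forall v, Q m (A1 X) v <= Q m (A X) v) -> (forall v, Q m (B X) v <= Q m (B1 X) v) ->
  ERle (r_val m A1 B1 X) (r_val m A B X).
Proof.
  intros GA GB GA1 GB1 HX HA HB. apply einf_mono. apply r_nonneg_set. apply r_nonneg_set.
  intros e [t [-> [Ht H]]]. exists (Fin t). split; [|simpl; lra]. exists t. split; auto.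
  assert (rset m A1 B1 X t); [|apply H0]. apply (rset_intro n); auto.
  intros v. pose proof (rset_Q m A B X t v (conj Ht H)). specialize (HA v); specialize (HB v). nra.
Qed.
Lemma rho_mono n m A B A1 B1 : good n m A -> good n m B -> good n m A1 -> good n m B1 ->
  (forall X, PSD n X -> nonzero n X -> forall v, Q m (A1 X) v <= Q m (A X) v) ->
  (forall X, PSD n X -> nonzero n X -> forall v, Q m (B X) v <= Q m (B1 X) v) ->
  (1 <= n)%nat ->
  ERle (rho n m A1 B1) (rho n m A B) /\ ERle (rhohat n m A1 B1) (rhohat n m A B).
Proof.
  intros GA GB GA1 GB1 HA HB Hn. split; apply einf_mono; try apply rho_set_nonneg; try apply rhohat_set_nonneg.
  - intros e [X [HX ->]]. exists (r_val m A1 B1 X). split. eauto.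
    apply (r_mono n); auto. apply HX. apply HA; auto using PD_PSD, PD_nonzero. apply HB; auto using PD_PSD, PD_nonzero.
  - intros e [X [HX [HZ ->]]]. exists (r_val m A1 B1 X). split. eauto.
    apply (r_mono n); auto. apply HX.
Qed.
Lemma Mcv_sub n M M0 phi : incr phi -> Mcv n M M0 -> Mcv n (fun k => M (phi k)) M0.
Proof.
  intros Hp H i j Hi Hj. destruct (H i j Hi Hj). split; apply (cv_sub (fun k => _ (M k i j))); auto; apply incr_ge; auto.
Qed.
Lemma LIM n m A B X t T E : is_CP n m A -> is_CP n m B ->
  (forall k, PSD1 n (X k)) -> (forall k, 0 <= t k <= T) -> Mcv m E (fun _ _ => C0) ->
  (forall k, PSD m (msub (mscale (t k) (madd (B (X k)) (E k))) (A (X k)))) ->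
  exists phi, incr phi /\ exists Y t0, PSD1 n Y /\ 0 <= t0 <= T /\ Un_cv (fun k => t (phi k)) t0 /\ rset m A B Y t0.
Proof.
  intros HA HB HX Ht HE HP. pose proof (CP_good _ _ _ HA) as GA. pose proof (CP_good _ _ _ HB) as GB.
  destruct (extract n X t T HX Ht) as [phi [Hphi [Y [t0 [HY [Ht0 [HM Htc]]]]]]].
  exists phi. split; auto. exists Y, t0. split; auto. split; auto. split; auto.
  assert (HYh : Herm n Y) by apply HY.
  assert (Hlim : PSD m (msub (mscale t0 (madd (B Y) (fun _ _ => C0))) (A Y))).
  { apply (PSD_closed m (fun k => msub (mscale (t (phi k)) (madd (B (X (phi k))) (E (phi k)))) (A (X (phi k))))).
    intros; apply HP.
    apply Mcv_msub. apply Mcv_mscale; auto. apply Mcv_madd.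
    apply (CP_cont n m B (fun k => X (phi k))); auto. intros; apply HX. apply Mcv_sub; auto.
    apply (CP_cont n m A (fun k => X (phi k))); auto. intros; apply HX. }
  apply (rset_intro n); auto. lra. intros v. pose proof (PSD_Q _ _ v Hlim).
  assert (Hz : Q m (fun _ _ => C0) v = 0) by (unfold Q; rewrite qform_zeroM; reflexivity).
  rewrite Q_msub, Q_mscale, Q_madd, Hz in H. lra.
Qed.
Lemma t_bound t phi t0 p : incr phi -> Un_cv (fun k => t (phi k)) t0 -> (forall k, t k < p + / INR (S k)) -> t0 <= p.
Proof.
  intros Hp Hc Ht. apply Rnot_lt_le; intros Hl. assert (0 < t0 - p) by lra.
  destruct (archimed_cor1 _ H) as [N [HN1 HN2]].
  assert (t0 <= p + / INR N); [|lra].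
  apply (cv_le_ev _ _ _ N Hc). intros k Hk. left. eapply Rlt_le_trans. apply Ht.
  apply Rplus_le_compat_l. apply Rinv_le_contravar. apply lt_0_INR; lia. apply le_INR.
  pose proof (incr_ge phi Hp k). lia.
Qed.
Lemma trace_Id n : trace n (Id n) = RtoC (INR n).
Proof.
  unfold trace. induction n. apply C_ext; simpl; ring.
  simpl csum. rewrite csum_ext with (g := fun i => Id (S n) i i) in IHn; [|auto].
  rewrite IHn. unfold Id; rewrite Nat.eqb_refl. rewrite S_INR. apply C_ext; simpl; ring.
Qed.
Lemma Y0_PSD1 n : (1 <= n)%nat -> PSD1 n (mscale (/ INR n) (Id n)).
Proof.
  intros Hn. assert (0 < INR n) by (apply lt_0_INR; lia). split.
  apply PSD_mscale. left; apply Rinv_0_lt_compat; auto. apply PD_PSD, Id_PD.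
  rewrite trace_mscale, trace_Id. apply C_ext; simpl; field; lra.
Qed.

Lemma prop3 n m A B : (1 <= n)%nat -> is_CP n m A -> is_CP n m B ->
  exists Y, PSD1 n Y /\ weakly_optimal n m A B Y.
Proof.
  intros Hn HA HB. pose proof (CP_good _ _ _ HA) as GA. pose proof (CP_good _ _ _ HB) as GB.
  destruct (rhohat n m A B) as [p|] eqn:Erh.
  - assert (Hk : forall k : nat, exists X t, PSD1 n X /\ rset m A B X t /\ t < p + / INR (S k)).
    { intros k. destruct (rhohat_lt n m A B p (p + / INR (S k))) as [X [t [HX [HZ [Hr Ht]]]]].
      rewrite Erh; simpl; lra. assert (0 < / INR (S k)) by (apply Rinv_0_lt_compat, lt_0_INR; lia). lra.
      destruct (normalize n X HX HZ) as [c [Hc HX1]]. exists (mscale (/ c) X), t. split; auto. split; auto.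
      apply (rset_scale n); auto. apply HX. apply Rinv_0_lt_compat; auto. }
    set (Xk := fun k => proj1_sig (constructive_indefinite_description _ (Hk k))).
    assert (Hk2 : forall k, exists t, PSD1 n (Xk k) /\ rset m A B (Xk k) t /\ t < p + / INR (S k)).
    { intros; unfold Xk; destruct constructive_indefinite_description; auto. }
    set (tk := fun k => proj1_sig (constructive_indefinite_description _ (Hk2 k))).
    assert (Htk : forall k, PSD1 n (Xk k) /\ rset m A B (Xk k) (tk k) /\ tk k < p + / INR (S k)).
    { intros; unfold tk; destruct constructive_indefinite_description; auto. }
    assert (Hp0 : 0 <= p) by (pose proof (rhohat_nonneg n m A B); rewrite Erh in H; exact H).
    destruct (LIM n m A B Xk tk (p + 1) (fun _ _ _ => C0)) as [phi [Hphi [Y [t0 [HY [Ht0 [Hc Hr]]]]]]]; auto.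
    + intros k. apply Htk.
    + intros k. destruct (Htk k) as [_ [[Ht _] Hl]]. split; auto.
      assert (/ INR (S k) <= 1). { rewrite <- Rinv_1. apply Rinv_le_contravar. lra. rewrite S_INR. pose proof (pos_INR k); lra. }
      lra.
    + intros i j _ _; apply Ccv_const.
    + intros k. apply PSD_ext with (msub (mscale (tk k) (B (Xk k))) (A (Xk k))). 
      intros i j _ _. unfold msub, mscale, madd. apply C_ext; simpl; ring. apply Htk.
    + exists Y. split; auto. split. apply HY. split. apply PSD1_nonzero; auto.
      apply ERle_antisym.
      * eapply ERle_trans. apply r_val_le; eauto. rewrite Erh; simpl. apply (t_bound tk phi); auto. intros; apply Htk.
      * apply rhohat_le. apply HY. apply PSD1_nonzero; auto.
  - exists (mscale (/ INR n) (Id n)). pose proof (Y0_PSD1 n Hn). split; auto. split. apply H. split.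
    apply PSD1_nonzero; auto.
    pose proof (rhohat_le n m A B _ (proj1 H) (PSD1_nonzero _ _ H)). rewrite Erh in H0.
    rewrite Erh. destruct (r_val m A B (mscale (/ INR n) (Id n))); simpl in H0; [tauto|reflexivity].
Qed.
Lemma prop1 n m A B : (1 <= n)%nat -> ERle (rhohat n m A B) (rho n m A B).
Proof.
  intros Hn. apply einf_mono. apply rho_set_nonneg. apply rhohat_set_nonneg.
  intros e [X [HX ->]]. exists (r_val m A B X). split. exists X. split. apply PD_PSD; auto. split; auto. apply PD_nonzero; auto.
  apply ERle_refl.
Qed.
Lemma map_le_Q n m F G : good n m F -> good n m G -> map_le n m F G ->
  forall X, PSD n X -> nonzero n X -> forall v, Q m (F X) v <= Q m (G X) v.
Proof.
  intros GF GG H X HX HZ v. destruct (normalize n X HX HZ) as [c [Hc HX1]].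
  pose proof (PSD_Q _ _ v (H _ HX1)). rewrite Q_msub in H0.
  rewrite (g_Q_scale n m G), (g_Q_scale n m F) in H0 by (auto; apply HX).
  assert (0 < / c) by (apply Rinv_0_lt_compat; auto). nra.
Qed.
Lemma prop4 n m A B : (1 <= n)%nat -> good n m A -> good n m B ->
  (exists Y, weakly_optimal n m A B Y /\ (PD m (B Y) \/ PD m (A Y))) ->
  rho n m A B <> Inf -> rho n m A B = rhohat n m A B.
Proof.
  intros Hn GA GB [Y [[HY [HZ Hr]] Hpd]] Hinf. pose proof (prop1 n m A B Hn) as H1.
  destruct (rho n m A B) as [x|] eqn:Erho; [|congruence].
  destruct (rhohat n m A B) as [p|] eqn:Erh; [|simpl in H1; tauto].
  apply ERle_antisym; [|auto]. rewrite <- Erho. apply ER_le_all. intros d Hd.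
  destruct (r_val_lt m A B Y p (p + d / 2)) as [t0 [Ht0 Ht0l]]. rewrite Hr; simpl; lra. lra.
  assert (HBY : PD m (B Y)).
  { destruct Hpd as [H|H]; auto. apply PD_intro. apply (g_herm _ _ _ GB), HY.
    intros v Hv. pose proof (PD_Q_pos m (A Y) v H Hv). pose proof (rset_Q _ _ _ _ _ v Ht0).
    destruct Ht0 as [Ht _]. nra. }
  eapply ERle_trans. apply (core4 n m A B Y t0 (d / 2)); auto. lra. simpl. lra.
Qed.
Lemma prop5 n m A B : (1 <= n)%nat -> is_CP n m A -> is_CP n m B ->
  rho n m A B <> Inf -> (map_pos n m A \/ map_pos n m B) -> rho n m A B = rhohat n m A B.
Proof.
  intros Hn HA HB Hinf Hpos. destruct (prop3 n m A B Hn HA HB) as [Y [HY1 HW]].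
  apply prop4; auto using CP_good. exists Y. split; auto.
  destruct Hpos as [H|H]; [right|left]; apply H; auto.
Qed.
Lemma upper6 (n m : nat) (A B : Map) (D : nat -> Map) : (1 <= n)%nat -> is_CP n m A -> is_CP n m B ->
  (forall l, is_CP n m (D l) /\ map_pos n m (D l)) -> forall p, rhohat n m A B = Fin p ->
  forall l, ERle (rho n m A (map_add B (D l))) (Fin p).
Proof.
  intros Hn HA HB HD p Erh l. pose proof (CP_good _ _ _ HA) as GA. pose proof (CP_good _ _ _ HB) as GB.
  pose proof (CP_good _ _ _ (proj1 (HD l))) as GD. pose proof (good_add _ _ _ _ GB GD) as GBl.
  destruct (prop3 n m A B Hn HA HB) as [Y [HY1 [HY [HZ Hr]]]].
  apply ER_le_all. intros d Hd.
  destruct (r_val_lt m A B Y p (p + d / 2)) as [t0 [Ht0 Ht0l]]. rewrite Hr, Erh; simpl; lra. lra.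
  assert (HDY : PD m (D l Y)) by (apply (proj2 (HD l)); auto).
  assert (Hr' : rset m A (map_add B (D l)) Y t0).
  { apply (rset_intro n); auto. apply HY. apply Ht0. intros v. unfold map_add. rewrite Q_madd.
    pose proof (rset_Q _ _ _ _ _ v Ht0). pose proof (PSD_Q _ _ v (PD_PSD _ _ HDY)). destruct Ht0 as [Ht _]. nra. }
  assert (HBY : PD m (map_add B (D l) Y)).
  { apply PD_intro. apply (g_herm _ _ _ GBl), HY. intros v Hv. unfold map_add. rewrite Q_madd.
    pose proof (PD_Q_pos _ _ v HDY Hv). pose proof (PSD_Q _ _ v (g_psd _ _ _ GB Y HY)). lra. }
  eapply ERle_trans. apply (core4 n m A (map_add B (D l)) Y t0 (d / 2)); auto. lra. simpl; lra.
Qed.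

Lemma low6 (n m : nat) (A B : Map) (D : nat -> Map) q : (1 <= n)%nat -> is_CP n m A -> is_CP n m B ->
  (forall l, is_CP n m (D l) /\ map_pos n m (D l)) -> map_cv0 n m D ->
  (forall N, exists l, (N <= l)%nat /\ exists X t, PD n X /\ rset m A (map_add B (D l)) X t /\ t < q) ->
  ERle (rhohat n m A B) (Fin q).
Proof.
  intros Hn HA HB HD Hcv H. pose proof (CP_good _ _ _ HA) as GA. pose proof (CP_good _ _ _ HB) as GB.
  assert (GD : forall l, good n m (D l)) by (intros; apply CP_good, HD).
  assert (H2 : forall N, exists l, (N <= l)%nat /\ exists X t, PSD1 n X /\ rset m A (map_add B (D l)) X t /\ t <= q).
  { intros N. destruct (H N) as [l [Hl [X [t [HX [Hr Ht]]]]]]. exists l. split; auto.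
    destruct (normalize n X (PD_PSD _ _ HX) (PD_nonzero _ _ Hn HX)) as [c [Hc HX1]].
    exists (mscale (/ c) X), t. split; auto. split; [|lra]. apply (rset_scale n); auto.
    apply good_add; auto. apply HX. apply Rinv_0_lt_compat; auto. }
  set (lN := fun N => proj1_sig (constructive_indefinite_description _ (H2 N))).
  assert (H3 : forall N, (N <= lN N)%nat /\ exists X t, PSD1 n X /\ rset m A (map_add B (D (lN N))) X t /\ t <= q).
  { intros; unfold lN; destruct constructive_indefinite_description; auto. }
  assert (H4 : forall N, exists X t, PSD1 n X /\ rset m A (map_add B (D (lN N))) X t /\ t <= q) by apply H3.
  set (XN := fun N => proj1_sig (constructive_indefinite_description _ (H4 N))).
  assert (H5 : forall N, exists t, PSD1 n (XN N) /\ rset m A (map_add B (D (lN N))) (XN N) t /\ t <= q).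
  { intros; unfold XN; destruct constructive_indefinite_description; auto. }
  set (tN := fun N => proj1_sig (constructive_indefinite_description _ (H5 N))).
  assert (H6 : forall N, PSD1 n (XN N) /\ rset m A (map_add B (D (lN N))) (XN N) (tN N) /\ tN N <= q).
  { intros; unfold tN; destruct constructive_indefinite_description; auto. }
  set (cI := mscale (cb n) (Id n)).
  assert (HcI : Herm n cI) by (apply Herm_mscale, Herm_Id).
  destruct (LIM n m A B XN tN q (fun N => D (lN N) cI)) as [phi [Hphi [Y [t0 [HY [Ht0 [_ Hr]]]]]]]; auto.
  - intros N; apply H6.
  - intros N. destruct (H6 N) as [_ [[Ht _] Hq]]. split; auto.
  - intros i j Hi Hj. destruct (Hcv cI HcI i j Hi Hj) as [C1' C2'].
    split; simpl; apply (cv_sub (fun l => _ (D l cI i j))); auto; intros; apply H3.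
  - intros N. destruct (H6 N) as [HX [Hr Hq]]. assert (HXh : Herm n (XN N)) by apply HX.
    apply PSD_intro. apply Herm_msub. apply Herm_mscale. apply Herm_madd. apply (g_herm _ _ _ GB); auto.
    apply (g_herm _ _ _ (GD _)); auto. apply (g_herm _ _ _ GA); auto.
    intros v. rewrite Q_msub, Q_mscale, Q_madd.
    pose proof (rset_Q _ _ _ _ _ v Hr) as Hr'. unfold map_add in Hr'. rewrite Q_madd in Hr'.
    pose proof (PSD_Q _ _ v (g_psd _ _ _ (GD (lN N)) _ (PSD1_le_cId n (XN N) HX))) as Hc.
    rewrite (g_Q_sub n m) in Hc; auto. fold cI in Hc. destruct Hr as [Ht _]. nra.
  - eapply ERle_trans. apply (rhohat_le n m A B Y). apply HY. apply PSD1_nonzero; auto.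
    eapply ERle_trans. apply r_val_le; eauto. simpl; lra.
Qed.

Lemma prop6 (n m : nat) (A B : Map) (D : nat -> Map) : (1 <= n)%nat -> is_CP n m A -> is_CP n m B ->
  (forall l, is_CP n m (D l) /\ map_pos n m (D l)) -> map_cv0 n m D ->
  ER_cv (fun l => rho n m A (map_add B (D l))) (rhohat n m A B).
Proof.
  intros Hn HA HB HD Hcv. destruct (rhohat n m A B) as [p|] eqn:Erh; simpl.
  - intros eps He. apply NNPP; intros Hno.
    assert (ERle (rhohat n m A B) (Fin (p - eps / 2))); [|rewrite Erh in H; simpl in H; lra].
    apply (low6 n m A B D); auto. intros N. apply NNPP; intros HN. apply Hno. exists N. intros k Hk.
    pose proof (upper6 n m A B D Hn HA HB HD p Erh k).
    destruct (rho n m A (map_add B (D k))) as [x|] eqn:Ex; [|simpl in H; tauto].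
    exists x. split; auto. simpl in H. apply Rabs_def1; [lra|].
    apply Rnot_le_lt; intros Hle. apply HN. exists k. split; auto.
    destruct (rho_lt n m A (map_add B (D k)) x (p - eps / 2)) as [X [t [HX [Hr Ht]]]]. rewrite Ex; simpl; lra. lra.
    eauto.
  - intros M. apply NNPP; intros Hno.
    assert (ERle (rhohat n m A B) (Fin (Rabs M + 1))); [|rewrite Erh in H; simpl in H; lra].
    apply (low6 n m A B D); auto. intros N. apply NNPP; intros HN. apply Hno. exists N. intros k Hk.
    destruct (rho n m A (map_add B (D k))) as [x|] eqn:Ex; simpl; auto.
    apply Rnot_lt_le; intros Hlt. apply HN. exists k. split; auto.
    destruct (rho_lt n m A (map_add B (D k)) x (Rabs M + 1)) as [X [t [HX [Hr Ht]]]]. rewrite Ex; simpl; lra.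
    pose proof (Rle_abs M). lra. eauto.
Qed.
Lemma div_nonneg' a b : 0 <= a -> 0 < b -> 0 <= a / b.
Proof. intros; unfold Rdiv; apply Rmult_le_pos; [lra|left; apply Rinv_0_lt_compat; lra]. Qed.
Lemma rsum_cv n (f : nat -> nat -> R) g : (forall i, (i < n)%nat -> Un_cv (fun k => f k i) (g i)) ->
  Un_cv (fun k => rsum n (f k)) (rsum n g).
Proof.
  induction n; intros H; simpl. apply cv_const. apply CV_plus. apply IHn; intros; apply H; lia. apply H; lia.
Qed.
Lemma cv_abs0 u : Un_cv u 0 -> Un_cv (fun k => Rabs (u k)) 0.
Proof.
  intros H eps He. destruct (H eps He) as [N HN]. exists N. intros k Hk. specialize (HN k Hk).
  unfold Rdist in *. rewrite Rminus_0_r in *. rewrite Rabs_Rabsolu. auto.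
Qed.
Lemma Kn_cv0 m E : Mcv m E (fun _ _ => C0) -> Un_cv (fun k => Kn m (E k)) 0.
Proof.
  intros H. unfold Kn.
  replace 0 with (rsum m (fun _ => rsum m (fun _ => 0 + 0))).
  apply (rsum_cv m (fun k i => rsum m (fun j => Rabs (Cre (E k i j)) + Rabs (Cim (E k i j))))).
  intros i Hi. apply (rsum_cv m (fun k j => Rabs (Cre (E k i j)) + Rabs (Cim (E k i j)))).
  intros j Hj. destruct (H i j Hi Hj). apply CV_plus; apply cv_abs0; auto.
  rewrite !rsum_const. ring.
Qed.

Lemma prop7 (n m : nat) (A B : Map) (D : nat -> Map) : (1 <= n)%nat -> is_CP n m A -> is_CP n m B ->
  (forall l, is_CP n m (D l) /\ map_pos n m (D l)) -> map_cv0 n m D -> PD m (B (Id n)) ->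
  ER_cv (fun l => rho n m (map_add A (D l)) B) (rho n m A B).
Proof.
  intros Hn HA HB HD Hcv HBI. pose proof (CP_good _ _ _ HA) as GA. pose proof (CP_good _ _ _ HB) as GB.
  assert (GD : forall l, good n m (D l)) by (intros; apply CP_good, HD).
  destruct (PD_lower m _ HBI) as [cB [HcB HcBQ]].
  assert (Hfin : ERle (rho n m A B) (Fin (Kn m (A (Id n)) / cB))).
  { eapply ERle_trans. apply (rho_le n m A B (Id n)), Id_PD. apply r_val_le.
    assert (0 <= Kn m (A (Id n))).
    { unfold Kn. apply rsum_nonneg; intros; apply rsum_nonneg; intros.
      pose proof (Rabs_pos (Cre (A (Id n) i i0))); pose proof (Rabs_pos (Cim (A (Id n) i i0))); lra. }
    apply (rset_intro n); auto. apply Herm_Id. apply div_nonneg'; lra.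
    intros v. pose proof (Q_bound m (A (Id n)) v). apply Rabs_le_inv in H0. specialize (HcBQ v).
    pose proof (Nv_nonneg m v).
    assert (Kn m (A (Id n)) * Nv m v = Kn m (A (Id n)) / cB * (cB * Nv m v)) by (field; lra).
    assert (Kn m (A (Id n)) / cB * (cB * Nv m v) <= Kn m (A (Id n)) / cB * Q m (B (Id n)) v).
    { apply Rmult_le_compat_l; auto. apply div_nonneg'; lra. }
    lra. }
  pose proof (rho_nonneg n m A B) as Hp0.
  destruct (rho n m A B) as [p|] eqn:Erho; [|simpl in Hfin; tauto]. simpl.
  intros eps He.
  destruct (rho_lt n m A B p (p + eps / 3)) as [X [t [HX [Hr Ht]]]]. rewrite Erho; simpl; lra. lra.
  assert (HXh : Herm n X) by apply HX.
  destruct (PD_lower n X HX) as [s [Hs HsQ]].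
  assert (HBX : PD m (B X)).
  { apply PD_intro. apply (g_herm _ _ _ GB); auto. intros v Hv.
    assert (HP : PSD n (msub X (mscale s (Id n)))).
    { apply PSD_intro. apply Herm_msub; auto. apply Herm_mscale, Herm_Id.
      intros w. rewrite Q_msub, Q_mscale, Q_Id. specialize (HsQ w). lra. }
    pose proof (PSD_Q _ _ v (g_psd _ _ _ GB _ HP)).
    rewrite (g_Q_sub n m B), (g_Q_scale n m B) in H; auto using Herm_Id.
    2: apply Herm_mscale, Herm_Id.
    specialize (HcBQ v). assert (0 < s * (cB * Nv m v)) by (apply Rmult_lt_0_compat; [lra|apply Rmult_lt_0_compat; lra]). nra. }
  destruct (PD_lower m _ HBX) as [c' [Hc' Hc'Q]].
  assert (HK : Un_cv (fun l => Kn m (D l X)) 0).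
  { apply Kn_cv0. intros i j Hi Hj. apply (Hcv X HXh i j Hi Hj). }
  destruct (HK (eps / 3 * c')) as [N HN]. apply Rmult_lt_0_compat; lra.
  exists N. intros k Hk. specialize (HN k Hk). unfold Rdist in HN. rewrite Rminus_0_r in HN.
  apply Rabs_def2 in HN. destruct HN as [HN _].
  assert (Hlow : ERle (rho n m A B) (rho n m (map_add A (D k)) B)).
  { apply (rho_mono n m (map_add A (D k)) B A B); auto. apply good_add; auto.
    - intros Y HY HZ v. unfold map_add. rewrite Q_madd. pose proof (PSD_Q _ _ v (g_psd _ _ _ (GD k) _ HY)). lra.
    - intros; lra. }
  assert (Hup : ERle (rho n m (map_add A (D k)) B) (Fin (t + eps / 3))).
  { eapply ERle_trans. apply (rho_le n m _ B X HX). apply r_val_le.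
    apply (rset_intro n); auto. apply good_add; auto. destruct Hr; lra.
    intros v. unfold map_add. rewrite Q_madd. pose proof (rset_Q _ _ _ _ _ v Hr).
    pose proof (Q_bound m (D k X) v). apply Rabs_le_inv in H0. specialize (Hc'Q v).
    pose proof (Nv_nonneg m v). nra. }
  rewrite Erho in Hlow. destruct (rho n m (map_add A (D k)) B) as [x|]; simpl in *; [|tauto].
  exists x. split; auto. apply Rabs_def1; lra.
Qed.

Theorem lemma7p3 (n m : nat) (A B : Map) (Hn : (1 <= n)%nat)
  (HA : is_CP n m A) (HB : is_CP n m B) :
  (* (1) *)
  ERle (rhohat n m A B) (rho n m A B) /\
  (* (2) *)
  (forall A1 B1 : Map, is_CP n m A1 -> is_CP n m B1 ->
     map_le n m A1 A -> map_le n m B B1 ->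
     ERle (rho n m A1 B1) (rho n m A B) /\
     ERle (rhohat n m A1 B1) (rhohat n m A B)) /\
  (* (3) *)
  (exists Y, PSD1 n Y /\ weakly_optimal n m A B Y) /\
  (* (4) *)
  ((exists Y, weakly_optimal n m A B Y /\ (PD m (B Y) \/ PD m (A Y))) ->
     rho n m A B <> Inf -> rho n m A B = rhohat n m A B) /\
  (* (5) *)
  (rho n m A B <> Inf -> (map_pos n m A \/ map_pos n m B) ->
     rho n m A B = rhohat n m A B) /\
  (* (6) *)
  (forall D : nat -> Map, (forall l, is_CP n m (D l) /\ map_pos n m (D l)) ->
     map_cv0 n m D ->
     ER_cv (fun l => rho n m A (map_add B (D l))) (rhohat n m A B)) /\
  (* (7) *)
  (forall D : nat -> Map, (forall l, is_CP n m (D l) /\ map_pos n m (D l)) ->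
     map_cv0 n m D -> PD m (B (Id n)) ->
     ER_cv (fun l => rho n m (map_add A (D l)) B) (rho n m A B)).
Proof.
  pose proof (CP_good _ _ _ HA) as GA. pose proof (CP_good _ _ _ HB) as GB.
  split; [apply prop1; auto|].
  split.
  { intros A1 B1 HA1 HB1 HleA HleB. pose proof (CP_good _ _ _ HA1) as GA1. pose proof (CP_good _ _ _ HB1) as GB1.
    apply (rho_mono n m A B A1 B1); auto.
    - apply map_le_Q; auto.
    - apply map_le_Q; auto. }
  split; [apply prop3; auto|].
  split; [intros; apply prop4; auto|].
  split; [intros; apply prop5; auto|].
  split; [intros; apply prop6; auto|].
  intros; apply prop7; auto.
Qed.
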